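(* Fix $r\in(0,1)$, $\gamma\in\mathbb R$, $b\in(0,\infty)$ and $\theta\in\mathbb R$ with $\theta/\pi$ irrational. For $\delta\in(0,\tfrac12)$ and integers $q,k\ge1$, $N\ge2$, let $E_{q,k}(\delta,N)$ be the set of all $\beta\in[0,\pi)$ such that $$\sup_{\tau\in[1,r^{-qk}]}\frac1N\#\Big\{n\in[N]:\ \big\|b\tau r^{\,q-qk(N-n)}\cos(\beta+\gamma-nqk\theta)\big\|\le\frac{r^{2qk}}{15}\Big\}>1-\delta,$$ and let $$E=\bigcap_{i\ge3}\ \bigcup_{q,k\ge1}\ \limsup_{N\to\infty}E_{q,k}(1/i,N).$$ Then $\dim_H E=0$.
   Context: For $x\in\mathbb R$, $\|x\|=\min\{|x-j|:j\in\mathbb Z\}$ is the distance to the nearest integer; $[N]=\{1,\dots,N\}$; $\limsup_{N}E_N=\bigcap_{N_0}\bigcup_{N\ge N_0}E_N$. *)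

(* Defs.v *)
From Stdlib Require Import Reals Lra Lia ZArith.
Open Scope R_scope.

(* ||x|| : distance from x to the nearest integer.  With m = up x - 1 the
   floor of x (m <= x < m+1), this is min(x - m, (m+1) - x). *)
Definition dist_int (x : R) : R :=
  Rmin (x - IZR (up x - 1)) (IZR (up x) - x).

Fixpoint count_upto (P : nat -> bool) (N : nat) : nat :=
  match N with
  | O => O
  | S M => (count_upto P M + (if P (S M) then 1 else 0))%nat
  end.

Definition Rle_b (x y : R) : bool := if Rle_dec x y then true else false.

Definition irrational (x : R) : Prop :=
  ~ (exists p q : Z, q <> 0%Z /\ x = IZR p / IZR q).

Definition prop_count (r gamma b theta : R) (q k N : nat) (tau beta : R) : R :=
  INR (count_upto (fun n =>
         Rle_b (dist_int (b * tau
                  * powerRZ r (Z.of_nat q - Z.of_nat (q * k * (N - n)))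
                  * cos (beta + gamma - INR n * INR q * INR k * theta)))
               (r ^ (2 * q * k) / 15)) N) / INR N.

Definition E_qk (r gamma b theta : R) (q k : nat) (delta : R) (N : nat) (beta : R) : Prop :=
  0 <= beta < PI /\
  exists m : R,
    is_lub (fun y => exists tau, 1 <= tau <= powerRZ r (- Z.of_nat (q * k)) /\
                                 y = prop_count r gamma b theta q k N tau beta) m
    /\ m > 1 - delta.

Definition limsup_set (A : nat -> R -> Prop) (x : R) : Prop :=
  forall N0 : nat, exists N : nat, (N0 <= N)%nat /\ (2 <= N)%nat /\ A N x.

Definition E_set (r gamma b theta : R) (beta : R) : Prop :=
  forall i : nat, (3 <= i)%nat ->
    exists q k : nat, (1 <= q)%nat /\ (1 <= k)%nat /\
      limsup_set (fun N => E_qk r gamma b theta q k (/ INR i) N) beta.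

Definition diam_le (U : R -> Prop) (d : R) : Prop :=
  forall x y, U x -> U y -> Rabs (x - y) <= d.

(* H^s_delta(E) = 0 : for every eps > 0 there is a countable delta-cover (U_n)
   of E with sum_n diam(U_n)^s <= eps (the d_n are upper bounds for the
   diameters, which does not change the infimum). *)
Definition Hcontent_delta_zero (s delta : R) (E : R -> Prop) : Prop :=
  forall eps, 0 < eps ->
    exists (U : nat -> R -> Prop) (d : nat -> R),
      (forall n, 0 < d n <= delta /\ diam_le (U n) (d n)) /\
      (forall x, E x -> exists n, U n x) /\
      (forall M, sum_f_R0 (fun n => Rpower (d n) s) M <= eps).

(* H^s(E) = lim_{delta -> 0} H^s_delta(E) = sup_delta H^s_delta(E) = 0 *)
Definition Hmeasure_zero (s : R) (E : R -> Prop) : Prop :=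
  forall delta, 0 < delta -> Hcontent_delta_zero s delta E.

Definition is_glb (S : R -> Prop) (m : R) : Prop :=
  (forall x, S x -> m <= x) /\ (forall m', (forall x, S x -> m' <= x) -> m' <= m).

Definition hausdorff_dim_is (E : R -> Prop) (d : R) : Prop :=
  is_glb (fun s => 0 <= s /\ Hmeasure_zero s E) d.

(* Main.v *)
Require Import Defs.
From Stdlib Require Import Reals Lra Lia ZArith List Classical.
From Stdlib Require Import IndefiniteDescription.
Open Scope R_scope.

Fixpoint cntb (f : nat -> bool) (j : nat) : nat :=
  match j with O => O | S j' => (cntb f j' + (if f j' then 1 else 0))%nat end.

Lemma cntb_S f j : cntb f (S j) = (cntb f j + (if f j then 1 else 0))%nat.
Proof. reflexivity. Qed.

Lemma cntb_mono f i j : (i <= j)%nat -> (cntb f i <= cntb f j)%nat.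
Proof. induction 1; auto. rewrite cntb_S; lia. Qed.

Lemma cntb_le f j : (cntb f j <= j)%nat.
Proof. induction j; simpl; auto. destruct (f j); lia. Qed.

Lemma nocons_gen f a L :
  (forall t, (a <= t)%nat -> (S t < a + L)%nat -> f t = true \/ f (S t) = true) ->
  (L <= S (2 * (cntb f (a + L) - cntb f a)))%nat.
Proof.
  revert a. induction L as [L IH] using lt_wf_ind. intros a H.
  destruct L as [|[|L]]. lia. lia.
  assert (HL := IH L ltac:(lia) a). 
  assert (Hm1 := cntb_mono f (a+L) (a + S L) ltac:(lia)).
  assert (Hm2 := cntb_mono f a (a + L) ltac:(lia)).
  replace (a + S (S L))%nat with (S (S (a + L)))%nat by lia.
  rewrite !cntb_S.
  destruct (H (a + L)%nat) as [E|E]; try lia.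
  - rewrite E. replace (S (a+L)) with (a + S L)%nat in * by lia.
    assert (HL' : (L <= S (2 * (cntb f (a + L) - cntb f a)))%nat).
    { apply HL. intros t h1 h2. apply H; lia. }
    destruct (f (a + S L)%nat); lia.
  - replace (S (a+L)) with (a + S L)%nat in * by lia. rewrite E.
    assert (HL' : (L <= S (2 * (cntb f (a + L) - cntb f a)))%nat).
    { apply HL. intros t h1 h2. apply H; lia. }
    destruct (f (a + L)%nat); lia.
Qed.

Lemma nocons_last f a L :
  (forall t, (a <= t)%nat -> (S t < a + L)%nat -> f t = true \/ f (S t) = true) ->
  (1 <= L)%nat -> f (a + L - 1)%nat = true ->
  (L <= 2 * (cntb f (a + L) - cntb f a))%nat.
Proof.
  intros H H1 Hl. destruct L as [|L]. lia.
  assert (HL := nocons_gen f a L ltac:(intros; apply H; lia)).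
  replace (a + S L)%nat with (S (a + L)) by lia. rewrite cntb_S.
  replace (a + S L - 1)%nat with (a + L)%nat in Hl by lia. rewrite Hl.
  assert (Hm2 := cntb_mono f a (a + L) ltac:(lia)). lia.
Qed.

Lemma max_true (g : nat -> bool) K :
  (exists i, (i < K)%nat /\ g i = true) ->
  exists i, (i < K)%nat /\ g i = true /\ forall i', (i < i')%nat -> (i' < K)%nat -> g i' = false.
Proof.
  induction K. intros [i [h _]]; lia.
  intros [i [h1 h2]]. destruct (g K) eqn:E.
  - exists K. split. lia. split. auto. intros; lia.
  - destruct (Nat.eq_dec i K). subst; congruence.
    destruct IHK as [i0 [a [b c]]]. exists i; split; [lia|auto].
    exists i0. split. lia. split. auto. intros i' h h'.
    destruct (Nat.eq_dec i' K). subst; auto. apply c; lia.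
Qed.

Lemma len_flat_map_le {A B} (f : A -> list B) (g : A -> R) l :
  (forall x, In x l -> INR (length (f x)) <= g x) ->
  INR (length (flat_map f l)) <= fold_right (fun x acc => g x + acc) 0 l.
Proof.
  induction l; simpl; intros H. lra.
  rewrite length_app, plus_INR.
  assert (H1 := H a (or_introl eq_refl)).
  assert (H2 := IHl (fun x hx => H x (or_intror hx))). lra.
Qed.

Lemma fold_const {A} (c : R) (l : list A) :
  fold_right (fun _ acc => c + acc) 0 l = INR (length l) * c.
Proof. induction l; simpl. lra. rewrite IHl. destruct (length l); simpl; lra. Qed.

Lemma fold_le {A} (g h : A -> R) l :
  (forall x, In x l -> g x <= h x) ->
  fold_right (fun x acc => g x + acc) 0 l <= fold_right (fun x acc => h x + acc) 0 l.
Proof.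
  induction l; simpl; intros H. lra.
  assert (H1 := H a (or_introl eq_refl)).
  assert (H2 := IHl (fun x hx => H x (or_intror hx))). lra.
Qed.

Lemma fold_scal {A} (c : R) (g : A -> R) l :
  fold_right (fun x acc => c * g x + acc) 0 l = c * fold_right (fun x acc => g x + acc) 0 l.
Proof. induction l; simpl. ring. rewrite IHl. ring. Qed.

Lemma geom_seq t a n : 0 <= t < 1 ->
  fold_right (fun m acc => t ^ m + acc) 0 (seq a n) <= t ^ a / (1 - t).
Proof.
  intros Ht. revert a. induction n; intros a; simpl.
  - apply Rmult_le_pos. apply pow_le; lra. apply Rlt_le, Rinv_0_lt_compat; lra.
  - assert (H := IHn (S a)). simpl in H.
    assert (0 <= t ^ a) by (apply pow_le; lra).
    assert (t ^ a + t * t ^ a / (1 - t) = t ^ a / (1 - t)) by (field; lra).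
    lra.
Qed.

Lemma Rabs_inv_le a b : Rabs a <= b -> -b <= a <= b.
Proof. unfold Rabs; destruct (Rcase_abs a); lra. Qed.
Lemma Rabs_inv_lt a b : Rabs a < b -> -b < a < b.
Proof. unfold Rabs; destruct (Rcase_abs a); lra. Qed.

Definition roundf (x : R) : Z := (up (x + /2) - 1)%Z.

Lemma round_uniq (z : Z) x : Rabs (IZR z - x) < /2 -> z = roundf x.
Proof.
  intros H. unfold roundf. apply Rabs_inv_lt in H. destruct H.
  assert (E : (z + 1)%Z = up (x + /2)).
  { apply tech_up; rewrite plus_IZR; simpl; lra. }
  lia.
Qed.


Lemma dist_int_ex x e : dist_int x <= e -> exists z : Z, Rabs (x - IZR z) <= e.
Proof.
  unfold dist_int. destruct (archimed x) as [h1 h2].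
  unfold Rmin. destruct (Rle_dec _ _); intros H.
  - exists (up x - 1)%Z. rewrite minus_IZR in *. change (IZR 1) with 1 in *.
    rewrite Rabs_right; lra.
  - exists (up x). rewrite Rabs_left1; lra.
Qed.

Definition ints_in (c Rr : R) : list Z :=
  map (fun k => (up (c - Rr) - 1 + Z.of_nat k)%Z) (seq 0 (Z.to_nat (up (2 * Rr)) + 1)).

Lemma ints_in_spec c Rr u : 0 <= Rr -> Rabs (IZR u - c) <= Rr -> In u (ints_in c Rr).
Proof.
  intros HR H. apply Rabs_inv_le in H. unfold ints_in. apply in_map_iff.
  destruct (archimed (c - Rr)) as [a1 a2]. destruct (archimed (2 * Rr)) as [b1 b2].
  set (s0 := (up (c - Rr) - 1)%Z).
  assert (Hs : IZR s0 = IZR (up (c - Rr)) - 1) by (unfold s0; rewrite minus_IZR; change (IZR 1) with 1; ring).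
  assert (L1 : (s0 <= u)%Z).
  { apply le_IZR. lra. }
  assert (L2 : (u - s0 <= up (2 * Rr))%Z).
  { assert (IZR (u - s0) < IZR (up (2*Rr)) + 1) by (rewrite minus_IZR; lra).
    assert (u - s0 < up (2 * Rr) + 1)%Z. { apply lt_IZR. rewrite plus_IZR. change (IZR 1) with 1. lra. }
    lia. }
  exists (Z.to_nat (u - s0)). split. lia.
  apply in_seq. lia.
Qed.

Lemma ints_in_len c Rr : 0 <= Rr -> INR (length (ints_in c Rr)) <= 2 * Rr + 2.
Proof.
  intros HR. unfold ints_in. rewrite length_map, length_seq.
  destruct (archimed (2 * Rr)) as [b1 b2].
  assert (0 < up (2 * Rr))%Z by (apply lt_IZR; simpl; lra).
  rewrite plus_INR, INR_IZR_INZ, Z2Nat.id by lia. simpl. lra.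
Qed.

Lemma ints_in_len2 c Rr : 0 <= Rr -> INR (length (ints_in c Rr)) <= 4 * Rmax 1 Rr.
Proof.
  intros. assert (H1:=ints_in_len c Rr H). unfold Rmax; destruct (Rle_dec 1 Rr); lra.
Qed.

Fixpoint Pm (rho c : R) (m : nat) : R :=
  match m with O => 1 | S O => 0
  | S ((S m2) as m1) => 2 * rho * c * Pm rho c m1 - rho ^ 2 * Pm rho c m2 end.
Fixpoint Qm (rho c : R) (m : nat) : R :=
  match m with O => 0 | S O => 1
  | S ((S m2) as m1) => 2 * rho * c * Qm rho c m1 - rho ^ 2 * Qm rho c m2 end.

Definition Rec (rho c : R) (z : nat -> R) :=
  forall i, z (S (S i)) = 2 * rho * c * z (S i) - rho ^ 2 * z i.

Lemma z_PQ rho c z : Rec rho c z -> forall m i,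
  z (i + m)%nat = Pm rho c m * z i + Qm rho c m * z (S i) /\
  z (i + S m)%nat = Pm rho c (S m) * z i + Qm rho c (S m) * z (S i).
Proof.
  intros H m i. induction m.
  - rewrite Nat.add_0_r, Nat.add_1_r. simpl. split; ring.
  - destruct IHm as [h1 h2]. split. exact h2.
    replace (i + S (S m))%nat with (S (S (i + m))) by lia. rewrite H.
    replace (S (i + m)) with (i + S m)%nat by lia. rewrite h1, h2.
    change (Pm rho c (S (S m))) with (2 * rho * c * Pm rho c (S m) - rho ^ 2 * Pm rho c m).
    change (Qm rho c (S (S m))) with (2 * rho * c * Qm rho c (S m) - rho ^ 2 * Qm rho c m).
    ring.
Qed.

Lemma PQ_bound rho c : 1 <= rho -> Rabs c <= 1 -> forall m,
  (Rabs (Pm rho c m) <= (3*rho)^m /\ Rabs (Qm rho c m) <= (3*rho)^m) /\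
  (Rabs (Pm rho c (S m)) <= (3*rho)^(S m) /\ Rabs (Qm rho c (S m)) <= (3*rho)^(S m)).
Proof.
  intros Hr Hc. induction m.
  - simpl. rewrite Rabs_R1, Rabs_R0. lra.
  - destruct IHm as [[a1 a2] [b1 b2]]. split. auto.
    assert (Hp : 0 <= (3*rho)^m) by (apply pow_le; lra).
    assert (Hcr: Rabs (2*rho*c) <= 2*rho).
    { rewrite Rabs_mult, (Rabs_right (2*rho)) by lra. nra. }
    assert (Hr2: Rabs (rho^2) = rho^2) by (apply Rabs_right; nra).
    assert (E : forall x y, Rabs x <= (3*rho)^S m -> Rabs y <= (3*rho)^m ->
       Rabs (2*rho*c*x - rho^2*y) <= (3*rho)^S (S m)).
    { intros x y hx hy.
      replace ((3*rho)^S (S m)) with (3*rho*(3*rho*(3*rho)^m)) by (simpl; ring).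
      replace ((3*rho)^S m) with (3*rho*(3*rho)^m) in hx by (simpl; ring).
      eapply Rle_trans. apply Rabs_triang. rewrite Rabs_Ropp, (Rabs_mult (2*rho*c)), (Rabs_mult (rho^2)), Hr2.
      replace (rho^2) with (rho*rho) by ring.
      assert (Rabs (2*rho*c) * Rabs x <= 2*rho * (3*rho*(3*rho)^m)).
      { apply Rmult_le_compat; auto using Rabs_pos. }
      assert (rho*rho*Rabs y <= rho*rho*(3*rho)^m).
      { apply Rmult_le_compat_l; nra. }
      assert (0 <= rho*rho*(3*rho)^m) by (apply Rmult_le_pos; nra).
      lra. }
    split; apply E; auto.
Qed.

Definition hm (m : nat) : nat := ((m + 1) / 3)%nat.
Lemma hm_spec m : (3 * hm m <= m + 1 /\ m + 1 < 3 * (hm m + 1))%nat.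
Proof.
  unfold hm. pose proof (Nat.div_mod (m+1) 3 ltac:(lia)).
  pose proof (Nat.mod_upper_bound (m+1) 3 ltac:(lia)). lia.
Qed.

Lemma Rle_b_true x y : Rle_b x y = true -> x <= y.
Proof. unfold Rle_b. destruct (Rle_dec x y); congruence. Qed.
Lemma Rle_b_false x y : Rle_b x y = false -> ~ x <= y.
Proof. unfold Rle_b. destruct (Rle_dec x y); congruence. Qed.

Definition Cfg rho c B (z : nat -> R) := Rec rho c z /\ forall i, Rabs (z i) <= B * rho ^ i.
Definition badf eps (z : nat -> R) i := negb (Rle_b (dist_int (z i)) eps).
Definition Sset rho c eps B j b (p : Z * Z) :=
  exists z, Cfg rho c B z /\ (cntb (badf eps z) j <= b)%nat /\
    Rabs (z j - IZR (fst p)) <= eps /\ Rabs (z (S j) - IZR (snd p)) <= eps.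

Definition Mc rho B lam := 2 * (2 * B + 4) ^ 2 * rho / lam.
Definition Vc rho lam := 2592 * rho ^ 4 / lam.
Definition Wc rho lam := (Vc rho lam) ^ 3.
Definition Rm rho m := 3 * (3 * rho) ^ (S m).

Lemma good_int eps z i : badf eps z i = false -> exists u : Z, Rabs (z i - IZR u) <= eps.
Proof.
  unfold badf. intros H. apply dist_int_ex.
  destruct (Rle_b (dist_int (z i)) eps) eqn:E; simpl in H; try congruence.
  apply Rle_b_true; auto.
Qed.

Lemma Vc_ge rho lam : 1 <= rho -> 0 < lam <= 1 -> rho ^ 4 <= Vc rho lam /\ 1 <= Vc rho lam.
Proof.
  intros Hr Hl. unfold Vc.
  assert (1 <= rho ^ 4) by (apply pow_R1_Rle; lra).
  assert (rho^4 <= 2592 * rho^4 / lam).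
  { apply Rle_trans with (2592 * rho ^ 4). lra.
    unfold Rdiv. rewrite <- (Rmult_1_r (2592 * rho^4)) at 1.
    apply Rmult_le_compat_l. lra. rewrite <- Rinv_1. apply Rinv_le_contravar; lra. }
  lra.
Qed.

Lemma Wc_ge rho lam : 1 <= rho -> 0 < lam <= 1 -> rho ^ 4 <= Wc rho lam /\ 1 <= Wc rho lam.
Proof.
  intros Hr Hl. destruct (Vc_ge rho lam Hr Hl) as [a b]. unfold Wc.
  assert (Vc rho lam <= Vc rho lam ^ 3).
  { replace (Vc rho lam ^ 3) with (Vc rho lam * (Vc rho lam * Vc rho lam)) by ring.
    rewrite <- (Rmult_1_r (Vc rho lam)) at 1. apply Rmult_le_compat_l. lra. nra. }
  lra.
Qed.

Definition tc rho lam := lam / (288 * rho ^ 2).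

Lemma Vt rho lam : 1 <= rho -> 0 < lam -> Vc rho lam * tc rho lam = 9 * rho ^ 2.
Proof. intros. unfold Vc, tc. field. repeat split; first [lra | apply pow_nonzero; lra]. Qed.

Lemma jump_term rho lam m b : 1 <= rho -> 0 < lam <= 1 -> (1 <= m)%nat -> (hm m <= b)%nat ->
  Wc rho lam ^ (b - hm m) * (144 * (3 * rho) ^ (2 * S m)) <=
  Wc rho lam ^ b * (1296 * rho ^ 2 * Vc rho lam * tc rho lam ^ m).
Proof.
  intros Hr Hl Hm1 Hb. destruct (Vc_ge rho lam Hr Hl) as [V1 V2].
  destruct (hm_spec m) as [h1 h2].
  assert (Eb : Wc rho lam ^ b = Wc rho lam ^ (b - hm m) * Wc rho lam ^ hm m).
  { rewrite <- pow_add. f_equal. lia. }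
  rewrite Eb.
  set (X := Wc rho lam ^ (b - hm m)).
  assert (HX : 0 <= X) by (unfold X; apply pow_le; destruct (Wc_ge rho lam Hr Hl); lra).
  rewrite Rmult_assoc. apply Rmult_le_compat_l; auto.
  unfold Wc. rewrite <- pow_mult.
  assert (Hv : Vc rho lam ^ (m - 1) <= Vc rho lam ^ (3 * hm m)) by (apply Rle_pow; [lra|lia]).
  assert (E : (3 * rho) ^ (2 * S m) = 9 * rho ^ 2 * (Vc rho lam ^ (m-1) * Vc rho lam * tc rho lam ^ m)).
  { replace (Vc rho lam ^ (m - 1) * Vc rho lam) with (Vc rho lam ^ m).
    2:{ replace m with (S (m-1)) at 1 by lia. simpl. ring. }
    rewrite <- Rpow_mult_distr, Vt by lra. rewrite pow_mult.
    replace ((3*rho)^2) with (9 * rho^2) by ring. simpl. ring. }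
  rewrite E.
  assert (0 <= Vc rho lam * tc rho lam ^ m).
  { apply Rmult_le_pos. lra. apply pow_le. unfold tc. apply Rmult_le_pos. lra.
    apply Rlt_le, Rinv_0_lt_compat. assert (0 < rho^2) by (apply pow_lt; lra). lra. }
  assert (0 <= rho^2) by (apply pow_le; lra).
  replace (144 * (9 * rho ^ 2 * (Vc rho lam ^ (m - 1) * Vc rho lam * tc rho lam ^ m)))
    with (1296 * rho^2 * Vc rho lam ^ (m-1) * (Vc rho lam * tc rho lam ^ m)) by ring.
  replace (Vc rho lam ^ (3 * hm m) * (1296 * rho ^ 2 * Vc rho lam * tc rho lam ^ m))
    with (1296 * rho^2 * Vc rho lam ^ (3 * hm m) * (Vc rho lam * tc rho lam ^ m)) by ring.
  apply Rmult_le_compat_r; auto. apply Rmult_le_compat_l; nra.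
Qed.

Lemma jump_sum rho lam n : 1 <= rho -> 0 < lam <= 1 ->
  fold_right (fun m acc => 1296 * rho ^ 2 * Vc rho lam * tc rho lam ^ m + acc) 0 (seq 3 n) <= lam / 2.
Proof.
  intros Hr Hl. rewrite (fold_scal (1296 * rho ^ 2 * Vc rho lam) (fun m => tc rho lam ^ m)).
  assert (Hr2 : 1 <= rho ^ 2) by (apply pow_R1_Rle; lra).
  assert (Ht : 0 <= tc rho lam <= 1/288).
  { unfold tc. split. apply Rmult_le_pos. lra. apply Rlt_le, Rinv_0_lt_compat; lra.
    unfold Rdiv. apply Rle_trans with (1 * / (288 * rho ^ 2)).
    apply Rmult_le_compat_r. apply Rlt_le, Rinv_0_lt_compat; lra. lra.
    rewrite !Rmult_1_l. apply Rinv_le_contravar; lra. }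
  assert (G := geom_seq (tc rho lam) 3 n ltac:(lra)).
  assert (Hpos : 0 <= 1296 * rho ^ 2 * Vc rho lam).
  { destruct (Vc_ge rho lam Hr Hl). apply Rmult_le_pos; lra. }
  eapply Rle_trans. apply Rmult_le_compat_l. exact Hpos. exact G.
  assert (E : 1296 * rho ^ 2 * Vc rho lam * (tc rho lam ^ 3 / (1 - tc rho lam))
     = 1296 * rho^2 * (Vc rho lam * tc rho lam) * tc rho lam ^ 2 / (1 - tc rho lam)).
  { field. lra. }
  rewrite E, Vt by lra.
  assert (E2 : tc rho lam ^ 2 = lam ^ 2 / (82944 * rho ^ 2 * rho ^ 2)).
  { unfold tc. field. repeat split; first [lra | apply pow_nonzero; lra]. }
  rewrite E2.
  replace (1296 * rho ^ 2 * (9 * rho ^ 2) * (lam ^ 2 / (82944 * rho ^ 2 * rho ^ 2)) / (1 - tc rho lam))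
    with ((11664 / 82944) * lam ^ 2 / (1 - tc rho lam)) by (field; repeat split; first [lra | apply pow_nonzero; lra]).
  apply Rmult_le_reg_r with (1 - tc rho lam). lra.
  unfold Rdiv at 1. rewrite Rmult_assoc, Rinv_l, Rmult_1_r by lra.
  nra.
Qed.

Definition Lbd rho B j b : list (Z*Z) :=
  if Nat.leb j (2*b) then list_prod (ints_in 0 (B*rho^j+1)) (ints_in 0 (B*rho^(S j)+1)) else nil.
Definition Lst rho c (Lf : nat -> nat -> list (Z*Z)) j b : list (Z*Z) :=
  match j with O => nil | S j' =>
    map (fun p => (snd p, roundf (2*rho*c*IZR (snd p) - rho^2*IZR (fst p)))) (Lf j' b) end.
Definition Ljp rho c (Lf : nat -> nat -> list (Z*Z)) j b : list (Z*Z) :=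
  flat_map (fun m => if Nat.leb (hm m) b then
     flat_map (fun p => list_prod
        (ints_in (Pm rho c m * IZR (fst p) + Qm rho c m * IZR (snd p)) (Rm rho m))
        (ints_in (Pm rho c (S m) * IZR (fst p) + Qm rho c (S m) * IZR (snd p)) (Rm rho m)))
      (Lf (j - m)%nat (b - hm m)%nat) else nil) (seq 3 (j - 2)).

Lemma Rm_ge rho m : 1 <= rho -> 1 <= Rm rho m.
Proof. intros. unfold Rm. assert (1 <= (3*rho)^S m) by (apply pow_R1_Rle; lra). lra. Qed.

Lemma len_Lbd rho B lam j b : 1 <= rho -> 0 <= B -> 0 < lam <= 1 ->
  INR (length (Lbd rho B j b)) <= Mc rho B lam * lam / 2 * Wc rho lam ^ b.
Proof.
  intros Hr HB Hl. unfold Lbd. destruct (Nat.leb j (2*b)) eqn:E.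
  2:{ simpl. assert (0 <= Wc rho lam ^ b) by (apply pow_le; destruct (Wc_ge rho lam Hr Hl); lra).
      unfold Mc. assert (0 <= (2*B+4)^2) by (apply pow_le; lra).
      replace (2 * (2 * B + 4) ^ 2 * rho / lam * lam / 2) with ((2*B+4)^2*rho) by (field; lra).
      apply Rmult_le_pos; nra. }
  apply Nat.leb_le in E.
  rewrite length_prod, mult_INR.
  assert (Rj : 1 <= rho ^ j) by (apply pow_R1_Rle; lra).
  assert (0 <= B * rho ^ j) by nra.
  assert (E2 : rho ^ S j = rho * rho ^ j) by reflexivity.
  assert (0 <= B * rho ^ S j) by (rewrite E2; nra).
  assert (A1 := ints_in_len 0 (B * rho ^ j + 1) ltac:(lra)).
  assert (A2 := ints_in_len 0 (B * rho ^ S j + 1) ltac:(lra)).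
  assert (P1 : 0 <= INR (length (ints_in 0 (B * rho ^ j + 1)))) by apply pos_INR.
  assert (P2 : 0 <= INR (length (ints_in 0 (B * rho ^ S j + 1)))) by apply pos_INR.
  eapply Rle_trans. apply Rmult_le_compat; eauto.
  assert (F1 : 2 * (B * rho ^ j + 1) + 2 <= (2*B+4) * rho^j) by nra.
  assert (F2 : 2 * (B * rho ^ S j + 1) + 2 <= (2*B+4) * rho^S j).
  { assert (1 <= rho ^ S j) by (apply pow_R1_Rle; lra). nra. }
  assert (G : rho ^ j * rho ^ j <= Wc rho lam ^ b).
  { rewrite <- pow_add. destruct (Wc_ge rho lam Hr Hl) as [w1 w2].
    apply Rle_trans with (rho ^ (4 * b)). apply Rle_pow; [lra|lia].
    rewrite pow_mult. apply pow_incr. split; [apply pow_le; lra|auto]. }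
  unfold Mc. replace (2 * (2 * B + 4) ^ 2 * rho / lam * lam / 2) with ((2*B+4)^2*rho) by (field; lra).
  apply Rle_trans with ((2*B+4) * rho^j * ((2*B+4) * rho^S j)).
  apply Rmult_le_compat; nra.
  rewrite E2. replace ((2 * B + 4) * rho ^ j * ((2 * B + 4) * (rho * rho ^ j)))
     with ((2*B+4)^2*rho * (rho^j*rho^j)) by ring.
  apply Rmult_le_compat_l. assert (0 <= (2*B+4)^2) by (apply pow_le; lra). nra. exact G.
Qed.

Lemma len_Ljp rho c B lam Lf j b : 1 <= rho -> 0 <= B -> 0 < lam <= 1 -> (1 <= j)%nat ->
  (forall j' b', (j' < j)%nat -> INR (length (Lf j' b')) <= Mc rho B lam * (1+lam)^j' * Wc rho lam ^ b') ->
  INR (length (Ljp rho c Lf j b)) <= Mc rho B lam * (1+lam)^(j-1) * Wc rho lam ^ b * (lam / 2).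
Proof.
  intros Hr HB Hl Hj HL. unfold Ljp.
  set (K := Mc rho B lam * (1+lam)^(j-1) * Wc rho lam ^ b).
  assert (HK : 0 <= K).
  { unfold K, Mc. destruct (Wc_ge rho lam Hr Hl).
    assert (0 <= (1+lam)^(j-1)) by (apply pow_le; lra).
    assert (0 <= Wc rho lam ^ b) by (apply pow_le; lra).
    assert (0 <= (2*B+4)^2) by (apply pow_le; lra).
    assert (0 <= 2 * (2 * B + 4) ^ 2 * rho / lam).
    { unfold Rdiv. apply Rmult_le_pos. nra. apply Rlt_le, Rinv_0_lt_compat; lra. }
    apply Rmult_le_pos; [apply Rmult_le_pos|]; auto. }
  eapply Rle_trans.
  apply (len_flat_map_le _ (fun m => K * (1296 * rho ^ 2 * Vc rho lam * tc rho lam ^ m))).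
  2:{ rewrite fold_scal. apply Rmult_le_compat_l; auto. apply jump_sum; auto. }
  intros m Hm. apply in_seq in Hm.
  assert (Hpos : 0 <= K * (1296 * rho ^ 2 * Vc rho lam * tc rho lam ^ m)).
  { apply Rmult_le_pos; auto. destruct (Vc_ge rho lam Hr Hl).
    assert (0 <= tc rho lam ^ m). { apply pow_le. unfold tc. apply Rmult_le_pos. lra.
      apply Rlt_le, Rinv_0_lt_compat. assert (0 < rho^2) by (apply pow_lt; lra). lra. }
    assert (0 <= rho^2) by (apply pow_le; lra).
    assert (0 <= Vc rho lam) by lra. apply Rmult_le_pos; [|auto]. apply Rmult_le_pos; [lra|lra]. }
  destruct (Nat.leb (hm m) b) eqn:Eb; [|simpl; auto].
  apply Nat.leb_le in Eb.
  eapply Rle_trans.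
  apply (len_flat_map_le _ (fun _ => 144 * (3 * rho) ^ (2 * S m))).
  { intros p _. rewrite length_prod, mult_INR.
    assert (A1 := ints_in_len2 (Pm rho c m * IZR (fst p) + Qm rho c m * IZR (snd p)) (Rm rho m)).
    assert (A2 := ints_in_len2 (Pm rho c (S m) * IZR (fst p) + Qm rho c (S m) * IZR (snd p)) (Rm rho m)).
    assert (R1 := Rm_ge rho m Hr).
    rewrite Rmax_right in A1, A2 by lra.
    eapply Rle_trans. apply Rmult_le_compat; try apply pos_INR. apply A1; lra. apply A2; lra.
    unfold Rm. replace (2 * S m)%nat with (S m + S m)%nat by lia. rewrite pow_add. apply Req_le; ring. }
  rewrite fold_const.
  assert (HLf := HL (j - m)%nat (b - hm m)%nat ltac:(lia)).
  assert (Hp144 : 0 <= 144 * (3 * rho) ^ (2 * S m)) by (assert (0 <= (3*rho)^(2 * S m)) by (apply pow_le; lra); lra).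
  eapply Rle_trans. apply Rmult_le_compat_r. exact Hp144. exact HLf.
  unfold K.
  assert (JT := jump_term rho lam m b Hr Hl ltac:(lia) Eb).
  assert (Hpow : (1 + lam) ^ (j - m) <= (1 + lam) ^ (j - 1)) by (apply Rle_pow; [lra|lia]).
  assert (0 <= Mc rho B lam).
  { unfold Mc. assert (0 <= (2*B+4)^2) by (apply pow_le; lra).
    unfold Rdiv. apply Rmult_le_pos. nra. apply Rlt_le, Rinv_0_lt_compat; lra. }
  assert (0 <= Wc rho lam ^ (b - hm m)) by (apply pow_le; destruct (Wc_ge rho lam Hr Hl); lra).
  assert (0 <= (1+lam)^(j-m)) by (apply pow_le; lra).
  replace (Mc rho B lam * (1 + lam) ^ (j - m) * Wc rho lam ^ (b - hm m) * (144 * (3 * rho) ^ (2 * S m)))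
    with (Mc rho B lam * (1 + lam) ^ (j - m) * (Wc rho lam ^ (b - hm m) * (144 * (3 * rho) ^ (2 * S m)))) by ring.
  replace (Mc rho B lam * (1 + lam) ^ (j - 1) * Wc rho lam ^ b * (1296 * rho ^ 2 * Vc rho lam * tc rho lam ^ m))
    with (Mc rho B lam * (1 + lam) ^ (j - 1) * (Wc rho lam ^ b * (1296 * rho ^ 2 * Vc rho lam * tc rho lam ^ m))) by ring.
  apply Rmult_le_compat; auto.
  apply Rmult_le_pos; auto. apply Rmult_le_pos; auto.
  apply Rmult_le_compat_l; auto.
Qed.

Lemma in_Ljp rho c Lf j b m p q :
  (3 <= m <= j)%nat -> (hm m <= b)%nat -> In q (Lf (j - m)%nat (b - hm m)%nat) ->
  In (fst p) (ints_in (Pm rho c m * IZR (fst q) + Qm rho c m * IZR (snd q)) (Rm rho m)) ->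
  In (snd p) (ints_in (Pm rho c (S m) * IZR (fst q) + Qm rho c (S m) * IZR (snd q)) (Rm rho m)) ->
  In p (Ljp rho c Lf j b).
Proof.
  intros Hm Hb Hq H1 H2. unfold Ljp. apply in_flat_map. exists m. split.
  apply in_seq. lia.
  apply Nat.leb_le in Hb. rewrite Hb. apply in_flat_map. exists q. split; auto.
  destruct p. apply in_prod; auto.
Qed.

Lemma count_main rho c eps B lam : 1 <= rho -> Rabs c <= 1 -> 0 <= eps <= 1 ->
  eps * (1 + rho) ^ 2 < / 2 -> 0 <= B -> 0 < lam <= 1 ->
  forall j b, exists l : list (Z * Z),
    INR (length l) <= Mc rho B lam * (1 + lam) ^ j * Wc rho lam ^ b /\
    forall p, Sset rho c eps B j b p -> In p l.
Proof.
  intros Hr Hc He Heps HB Hl j.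
  induction j as [j IH] using lt_wf_ind.
  assert (Hch : forall jb : nat * nat, exists l : list (Z*Z), (fst jb < j)%nat ->
     INR (length l) <= Mc rho B lam * (1 + lam) ^ (fst jb) * Wc rho lam ^ (snd jb) /\
     forall p, Sset rho c eps B (fst jb) (snd jb) p -> In p l).
  { intros [j' b']. simpl. destruct (lt_dec j' j) as [h|h].
    - destruct (IH j' h b') as [l Hl']. exists l. auto.
    - exists nil. intros; lia. }
  apply functional_choice in Hch. destruct Hch as [Lf0 HLf0].
  set (Lf := fun j' b' => Lf0 (j', b')).
  assert (HLf : forall j' b', (j' < j)%nat ->
     INR (length (Lf j' b')) <= Mc rho B lam * (1 + lam) ^ j' * Wc rho lam ^ b' /\
     forall p, Sset rho c eps B j' b' p -> In p (Lf j' b')).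
  { intros j' b' h. exact (HLf0 (j', b') h). }
  intros b.
  exists (Lbd rho B j b ++ Lst rho c Lf j b ++ Ljp rho c Lf j b).
  assert (HMc : 0 <= Mc rho B lam).
  { unfold Mc. assert (0 <= (2*B+4)^2) by (apply pow_le; lra).
    unfold Rdiv. apply Rmult_le_pos. nra. apply Rlt_le, Rinv_0_lt_compat; lra. }
  assert (HW : 0 <= Wc rho lam ^ b) by (apply pow_le; destruct (Wc_ge rho lam Hr Hl); lra).
  split.
  - rewrite !length_app, !plus_INR.
    assert (A1 := len_Lbd rho B lam j b Hr HB Hl).
    destruct j as [|j'].
    + simpl. unfold Ljp. simpl. rewrite Rmult_1_r.
      assert (Mc rho B lam * lam / 2 * Wc rho lam ^ b <= Mc rho B lam * Wc rho lam ^ b).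
      { replace (Mc rho B lam * lam / 2 * Wc rho lam ^ b) with ((Mc rho B lam * Wc rho lam ^ b) * (lam/2)) by field. rewrite <- (Rmult_1_r (Mc rho B lam * Wc rho lam ^ b)) at 2. apply Rmult_le_compat_l. nra. lra. }
      lra.
    + assert (A2 : INR (length (Lst rho c Lf (S j') b)) <= Mc rho B lam * (1 + lam) ^ j' * Wc rho lam ^ b).
      { simpl. rewrite length_map. apply HLf. lia. }
      assert (A3 := len_Ljp rho c B lam Lf (S j') b Hr HB Hl ltac:(lia) (fun j0 b0 h => proj1 (HLf j0 b0 h))).
      replace (S j' - 1)%nat with j' in A3 by lia.
      assert (1 <= (1+lam)^j') by (apply pow_R1_Rle; lra).
      change ((1+lam)^(S j')) with ((1+lam) * (1+lam)^j').
      set (X := Mc rho B lam * (1 + lam) ^ j' * Wc rho lam ^ b) in *.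
      assert (X >= Mc rho B lam * Wc rho lam ^ b).
      { unfold X. rewrite Rmult_assoc, (Rmult_comm ((1+lam)^j')), <- Rmult_assoc.
        apply Rle_ge. rewrite <- (Rmult_1_r (Mc rho B lam * Wc rho lam ^ b)) at 1.
        apply Rmult_le_compat_l. nra. lra. }
      replace (Mc rho B lam * ((1 + lam) * (1 + lam) ^ j') * Wc rho lam ^ b) with ((1+lam) * X)
        by (unfold X; ring).
      replace (Mc rho B lam * lam / 2 * Wc rho lam ^ b) with (Mc rho B lam * Wc rho lam ^ b * (lam/2)) in A1 by (field; lra).
      nra.
  - intros [u v] [z [[Hrec Hbd] [Hcnt [Hu Hv]]]]. simpl in Hu, Hv.
    destruct (Nat.leb j (2 * b)) eqn:Ejb.
    { apply in_or_app. left. unfold Lbd. rewrite Ejb. apply in_prod.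
      - apply ints_in_spec. assert (0 <= B * rho ^ j) by (apply Rmult_le_pos; [lra|apply pow_le; lra]). lra.
        assert (H := Hbd j). apply Rabs_inv_le in Hu. apply Rabs_inv_le in H.
        apply Rabs_le. lra.
      - apply ints_in_spec. assert (0 <= B * rho ^ S j) by (apply Rmult_le_pos; [lra|apply pow_le; lra]). lra.
        assert (H := Hbd (S j)). apply Rabs_inv_le in Hv. apply Rabs_inv_le in H.
        apply Rabs_le. lra. }
    apply Nat.leb_gt in Ejb.
    destruct j as [|j']. lia.
    apply in_or_app. right.
    destruct (badf eps z j') eqn:Ebad.
    2:{
      apply in_or_app. left.
      destruct (good_int eps z j' Ebad) as [u' Hu'].
      unfold Lst. apply in_map_iff. exists (u', u). cbn [fst snd]. split.
      - f_equal. symmetry. apply round_uniq.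
        assert (R1 := Hrec j').
        assert (E : IZR v - (2 * rho * c * IZR u - rho ^ 2 * IZR u') =
          (IZR v - z (S (S j'))) + 2 * rho * c * (z (S j') - IZR u) - rho^2 * (z j' - IZR u')) by (rewrite R1; ring).
        rewrite E.
        apply Rle_lt_trans with (eps + 2 * rho * eps + rho^2 * eps).
        + eapply Rle_trans. apply Rabs_triang. rewrite Rabs_Ropp.
          eapply Rle_trans. apply Rplus_le_compat_r. apply Rabs_triang.
          rewrite !Rabs_mult. rewrite (Rabs_right 2) by lra. rewrite (Rabs_right rho) by lra.
          rewrite (Rabs_right (rho^2)) by (apply Rle_ge, pow_le; lra).
          rewrite Rabs_minus_sym in Hv.
          assert (0 <= rho^2) by (apply pow_le; lra).
          assert (Rabs c * Rabs (z (S j') - IZR u) <= 1 * eps).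
          { apply Rmult_le_compat; auto using Rabs_pos. }
          assert (rho ^ 2 * Rabs (z j' - IZR u') <= rho^2 * eps) by (apply Rmult_le_compat_l; auto).
          assert (2 * rho * (Rabs c * Rabs (z (S j') - IZR u)) <= 2 * rho * eps).
          { apply Rmult_le_compat_l; lra. }
          nra.
        + replace (eps + 2 * rho * eps + rho ^ 2 * eps) with (eps * (1 + rho)^2) by ring. lra.
      - apply HLf. lia. exists z. repeat split; auto.
        assert (cntb (badf eps z) j' <= cntb (badf eps z) (S j'))%nat by (apply cntb_mono; lia). lia. }
    apply in_or_app. right.
    set (g := fun i => andb (negb (badf eps z i)) (negb (badf eps z (S i)))).
    destruct (classic (exists i, (i < S j' - 2)%nat /\ g i = true)) as [Hex|Hnex].
    + destruct (max_true g (S j' - 2) Hex) as [i [Hi [Hgi Hmax]]].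
      set (m := (S j' - i)%nat).
      assert (Hreg : (m - 2 <= 2 * (cntb (badf eps z) (i + 2 + (m - 2)) - cntb (badf eps z) (i + 2)))%nat).
      { apply nocons_last.
        - intros t h1 h2. destruct (lt_dec t (S j' - 2)) as [ht|ht].
          + assert (Hg := Hmax t ltac:(lia) ht). unfold g in Hg.
            destruct (badf eps z t), (badf eps z (S t)); simpl in Hg; auto; congruence.
          + right. replace (S t) with j' by (unfold m in h2; lia). auto.
        - unfold m; lia.
        - replace (i + 2 + (m - 2) - 1)%nat with j' by (unfold m; lia). auto. }
      replace (i + 2 + (m - 2))%nat with (S j') in Hreg by (unfold m; lia).
      assert (Hc1 : (cntb (badf eps z) (S j') = cntb (badf eps z) j' + 1)%nat).
      { rewrite cntb_S, Ebad. lia. }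
      assert (Hc2 := cntb_mono (badf eps z) (i+2) j' ltac:(lia)).
      assert (Hc3 := cntb_mono (badf eps z) i (i+2) ltac:(lia)).
      destruct (hm_spec m) as [hs1 hs2].
      assert (Hhm : (hm m <= cntb (badf eps z) (S j') - cntb (badf eps z) (i + 2))%nat) by lia.
      unfold g in Hgi. apply andb_prop in Hgi. destruct Hgi as [G1 G2].
      apply Bool.negb_true_iff in G1, G2.
      destruct (good_int eps z i G1) as [u' Hu'].
      destruct (good_int eps z (S i) G2) as [v' Hv'].
      apply (in_Ljp rho c Lf (S j') b m (u, v) (u', v')); cbn [fst snd].
      * unfold m; lia.
      * lia.
      * replace (S j' - m)%nat with i by (unfold m; lia). apply (proj2 (HLf i (b - hm m)%nat ltac:(lia))).
        exists z. repeat split; auto. simpl. lia.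
      * destruct (z_PQ rho c z Hrec m i) as [Z1 Z2].
        replace (i + m)%nat with (S j') in Z1 by (unfold m; lia).
        destruct (PQ_bound rho c Hr Hc m) as [[P1 Q1] _].
        apply ints_in_spec. assert (1 <= Rm rho m) by (apply Rm_ge; auto). lra.
        assert (E : IZR u - (Pm rho c m * IZR u' + Qm rho c m * IZR v') =
          - (z (S j') - IZR u) + Pm rho c m * (z i - IZR u') + Qm rho c m * (z (S i) - IZR v'))
          by (rewrite Z1; ring).
        rewrite E. eapply Rle_trans. apply Rabs_triang. rewrite Rabs_mult.
        eapply Rle_trans. apply Rplus_le_compat_r. apply Rabs_triang. rewrite Rabs_Ropp, Rabs_mult.
        assert (Rabs (Pm rho c m) * Rabs (z i - IZR u') <= (3*rho)^m * 1) by (apply Rmult_le_compat; auto using Rabs_pos; lra).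
        assert (Rabs (Qm rho c m) * Rabs (z (S i) - IZR v') <= (3*rho)^m * 1) by (apply Rmult_le_compat; auto using Rabs_pos; lra).
        assert (1 <= (3*rho)^m) by (apply pow_R1_Rle; lra).
        unfold Rm. change ((3*rho)^(S m)) with (3*rho*(3*rho)^m). nra.
      * destruct (z_PQ rho c z Hrec m i) as [Z1 Z2].
        replace (i + S m)%nat with (S (S j')) in Z2 by (unfold m; lia).
        destruct (PQ_bound rho c Hr Hc m) as [_ [P1 Q1]].
        apply ints_in_spec. assert (1 <= Rm rho m) by (apply Rm_ge; auto). lra.
        assert (E : IZR v - (Pm rho c (S m) * IZR u' + Qm rho c (S m) * IZR v') =
          - (z (S (S j')) - IZR v) + Pm rho c (S m) * (z i - IZR u') + Qm rho c (S m) * (z (S i) - IZR v'))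
          by (rewrite Z2; ring).
        rewrite E. eapply Rle_trans. apply Rabs_triang. rewrite Rabs_mult.
        eapply Rle_trans. apply Rplus_le_compat_r. apply Rabs_triang. rewrite Rabs_Ropp, Rabs_mult.
        assert (Rabs (Pm rho c (S m)) * Rabs (z i - IZR u') <= (3*rho)^(S m) * 1) by (apply Rmult_le_compat; auto using Rabs_pos; lra).
        assert (Rabs (Qm rho c (S m)) * Rabs (z (S i) - IZR v') <= (3*rho)^(S m) * 1) by (apply Rmult_le_compat; auto using Rabs_pos; lra).
        assert (1 <= (3*rho)^(S m)) by (apply pow_R1_Rle; lra).
        unfold Rm. lra.
    + exfalso.
      assert (Hreg : (S j' <= 2 * (cntb (badf eps z) (0 + S j') - cntb (badf eps z) 0))%nat).
      { apply nocons_last.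
        - intros t h1 h2. destruct (lt_dec t (S j' - 2)) as [ht|ht].
          + destruct (badf eps z t) eqn:E1; auto. destruct (badf eps z (S t)) eqn:E2; auto.
            exfalso. apply Hnex. exists t. split; auto. unfold g. rewrite E1, E2. reflexivity.
          + right. replace (S t) with j' by lia. auto.
        - lia.
        - replace (0 + S j' - 1)%nat with j' by lia. auto. }
      change (cntb (badf eps z) 0) with 0%nat in Hreg. rewrite Nat.add_0_l in Hreg. lia.
Qed.

Definition Cov (s dl : R) (E : R -> Prop) (e : R) : Prop :=
  exists (U : nat -> R -> Prop) (d : nat -> R),
    (forall n, 0 < d n <= dl /\ diam_le (U n) (d n)) /\
    (forall x, E x -> exists n, U n x) /\
    (forall M, sum_f_R0 (fun n => Rpower (d n) s) M <= e).

Lemma Cov_mono s dl (E F : R -> Prop) e : (forall x, E x -> F x) -> Cov s dl F e -> Cov s dl E e.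
Proof.
  intros H [U [d [h1 [h2 h3]]]]. exists U, d. split; [|split]; auto.
Qed.

Lemma sum_mono_M f M1 M2 : (forall n, 0 <= f n) -> (M1 <= M2)%nat ->
  sum_f_R0 f M1 <= sum_f_R0 f M2.
Proof. intros Hf H. induction H. lra. simpl. specialize (Hf (S m)). lra. Qed.

Lemma sum_geom_half eta M : sum_f_R0 (fun n => eta / 2 ^ S n) M = eta - eta / 2 ^ S M.
Proof.
  induction M. simpl. field. rewrite tech5, IHM. simpl. field. apply pow_nonzero. lra.
Qed.

Lemma sum_indic c L M : 0 <= c -> sum_f_R0 (fun n => if Nat.ltb n L then c else 0) M <= INR L * c.
Proof.
  intros Hc. assert (H : forall M, sum_f_R0 (fun n => if Nat.ltb n L then c else 0) M
     = INR (Nat.min (S M) L) * c).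
  { induction M0.
    - simpl. destruct L; simpl. lra. lra.
    - rewrite tech5, IHM0. destruct (Nat.ltb (S M0) L) eqn:E.
      + apply Nat.ltb_lt in E. rewrite (Nat.min_l (S M0)) by lia. rewrite (Nat.min_l (S (S M0))) by lia.
        rewrite (S_INR (S M0)). ring.
      + apply Nat.ltb_ge in E. rewrite (Nat.min_r (S (S M0))) by lia.
        destruct (le_lt_dec (S M0) L). rewrite Nat.min_l by lia.
        replace (S M0) with L by lia. ring. rewrite Nat.min_r by lia. ring. }
  rewrite H. apply Rmult_le_compat_r; auto. apply le_INR. lia.
Qed.

Lemma Cov_finite {A} s dl (E : R -> Prop) (Aset : A -> R -> Prop) (l : list A) ell eta :
  0 < s -> 0 < ell <= dl -> 0 < eta ->
  (forall a, In a l -> diam_le (Aset a) ell) ->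
  (forall x, E x -> exists a, In a l /\ Aset a x) ->
  Cov s dl E (INR (length l) * Rpower ell s + eta).
Proof.
  intros Hs Hell Heta Hdiam Hcov.
  set (pad := fun n => Rmin dl (Rpower (eta / 2 ^ S n) (/ s))).
  exists (fun n x => match nth_error l n with Some a => Aset a x | None => False end).
  exists (fun n => if Nat.ltb n (length l) then ell else pad n).
  assert (Hp : forall n, 0 < eta / 2 ^ S n).
  { intros. apply Rdiv_lt_0_compat; auto. apply pow_lt; lra. }
  assert (Hpad : forall n, 0 < pad n <= dl /\ Rpower (pad n) s <= eta / 2 ^ S n).
  { intros n. unfold pad. assert (0 < Rpower (eta / 2 ^ S n) (/ s)) by (apply exp_pos).
    split. split. apply Rmin_pos; lra. apply Rmin_l.
    apply Rle_trans with (Rpower (Rpower (eta / 2 ^ S n) (/ s)) s).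
    apply Rle_Rpower_l. lra. split. apply Rmin_pos; lra. apply Rmin_r.
    rewrite Rpower_mult, Rinv_l, Rpower_1 by (auto; lra). lra. }
  split; [|split].
  - intros n. destruct (Nat.ltb n (length l)) eqn:En.
    + apply Nat.ltb_lt in En. split. lra.
      destruct (nth_error l n) eqn:E2.
      * apply Hdiam. eapply nth_error_In; eauto.
      * intros x y [] _.
    + split. apply Hpad. apply Nat.ltb_ge in En. rewrite (proj2 (nth_error_None l n) En).
      intros x y [] _.
  - intros x Ex. destruct (Hcov x Ex) as [a [Ha Hx]].
    destruct (In_nth_error l a Ha) as [n Hn]. exists n. rewrite Hn. auto.
  - intros M. eapply Rle_trans.
    apply (sum_Rle _ (fun n => (if Nat.ltb n (length l) then Rpower ell s else 0) + eta / 2 ^ S n)).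
    { intros n _. destruct (Nat.ltb n (length l)).
      - assert (0 < eta / 2 ^ S n) by auto. lra.
      - destruct (Hpad n). lra. }
    rewrite sum_plus, sum_geom_half.
    assert (0 < eta / 2 ^ S M) by auto.
    assert (Hsi := sum_indic (Rpower ell s) (length l) M ltac:(left; apply exp_pos)). lra.
Qed.

Lemma Cov_empty s dl e : 0 < s -> 0 < dl -> 0 < e -> Cov s dl (fun _ => False) e.
Proof.
  intros. replace e with (INR (length (@nil nat)) * Rpower dl s + e) by (simpl; ring).
  apply (Cov_finite s dl _ (fun _ _ => False)); auto. lra. simpl; tauto. tauto.
Qed.

Fixpoint decf (f n : nat) : nat * nat :=
  match f with O => (O, O) | S f' =>
    if Nat.even n then (O, Nat.div2 n) else let p := decf f' (Nat.div2 n) in (S (fst p), snd p) end.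

Lemma decf_fuel f1 f2 n : (n < f1)%nat -> (n < f2)%nat -> decf f1 n = decf f2 n.
Proof.
  revert f2 n. induction f1; intros f2 n h1 h2. lia.
  destruct f2. lia. simpl. destruct (Nat.even n) eqn:E. auto.
  assert (n <> 0%nat) by (intro; subst; discriminate).
  assert (Nat.div2 n < n)%nat by (apply Nat.lt_div2; lia).
  rewrite (IHf1 f2); auto; lia.
Qed.

Definition Dn (n : nat) := decf (S n) n.

Lemma Dn_even t : Dn (2 * t) = (O, t).
Proof.
  unfold Dn. cbn [decf]. assert (Nat.even (2*t) = true) by (rewrite Nat.even_mul; reflexivity).
  rewrite H. f_equal. apply Nat.div2_double.
Qed.

Lemma Dn_odd t : Dn (S (2 * t)) = (S (fst (Dn t)), snd (Dn t)).
Proof.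
  unfold Dn. remember (S (2*t)) as n. cbn [decf].
  assert (Nat.even n = false) by (subst; rewrite Nat.even_succ, Nat.odd_mul; reflexivity).
  rewrite H. assert (Nat.div2 n = t) by (subst; apply Nat.div2_succ_double).
  rewrite H0. rewrite (decf_fuel n (S t) t); auto; lia.
Qed.

Lemma Dn_surj m t : exists n, Dn n = (m, t).
Proof.
  revert t. induction m; intros t. exists (2*t)%nat. apply Dn_even.
  destruct (IHm t) as [n0 H]. exists (S (2 * n0)). rewrite Dn_odd, H. reflexivity.
Qed.

Lemma sum_even_odd f K : sum_f_R0 f (S (2 * K)) =
  sum_f_R0 (fun t => f (2 * t)%nat) K + sum_f_R0 (fun t => f (S (2 * t))) K.
Proof.
  induction K. simpl. ring.
  replace (S (2 * S K)) with (S (S (S (2 * K)))) by lia.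
  rewrite tech5, tech5, IHK, (tech5 (fun t => f (2*t)%nat) K), (tech5 (fun t => f (S (2*t))) K).
  replace (2 * S K)%nat with (S (S (2 * K))) by lia. ring.
Qed.

Lemma Cov_union s dl (Em : nat -> R -> Prop) (e T : nat -> R) :
  (forall m, Cov s dl (Em m) (e m)) -> (forall m, 0 <= T m) ->
  (forall m, e m + T (S m) <= T m) ->
  Cov s dl (fun x => exists m, Em m x) (T O).
Proof.
  intros HC HT He.
  assert (Hch : forall m, exists Ud : (nat -> R -> Prop) * (nat -> R),
    (forall n, 0 < snd Ud n <= dl /\ diam_le (fst Ud n) (snd Ud n)) /\
    (forall x, Em m x -> exists n, fst Ud n x) /\
    (forall M, sum_f_R0 (fun n => Rpower (snd Ud n) s) M <= e m)).
  { intros m. destruct (HC m) as [U [d H]]. exists (U, d). exact H. }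
  apply functional_choice in Hch. destruct Hch as [F HF].
  set (g := fun m t => Rpower (snd (F m) t) s).
  exists (fun n => fst (F (fst (Dn n))) (snd (Dn n))).
  exists (fun n => snd (F (fst (Dn n))) (snd (Dn n))).
  split; [|split].
  - intros n. apply HF.
  - intros x [m Hx]. destruct (proj1 (proj2 (HF m)) x Hx) as [t Ht].
    destruct (Dn_surj m t) as [n Hn]. exists n. rewrite Hn. auto.
  - set (h := fun m n => g (m + fst (Dn n))%nat (snd (Dn n))).
    assert (Hg0 : forall m t, 0 <= g m t) by (intros; left; apply exp_pos).
    assert (Hh0 : forall m n, 0 <= h m n) by (intros; apply Hg0).
    assert (Hmain : forall M m, sum_f_R0 (h m) M <= T m).
    { intros M. induction M as [M IH] using lt_wf_ind. intros m.
      assert (Hgs : forall K, sum_f_R0 (g m) K <= e m) by (intros; apply HF).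
      destruct M as [|M'].
      - simpl. unfold h. rewrite Dn_even with (t := O) at 1. simpl. rewrite Nat.add_0_r.
        assert (H1 := Hgs O). simpl in H1. assert (H2 := He m). assert (H3 := HT (S m)). lra.
      - set (K := Nat.div2 (S M')).
        assert (HK : (S M' <= S (2 * K))%nat).
        { unfold K. pose proof (Nat.div2_odd (S M')). destruct (Nat.odd (S M')); simpl in *; lia. }
        assert (HK2 : (K < S M')%nat) by (apply Nat.lt_div2; lia).
        eapply Rle_trans. apply (sum_mono_M _ _ _ (Hh0 m) HK).
        rewrite sum_even_odd.
        assert (E1 : sum_f_R0 (fun t => h m (2 * t)%nat) K = sum_f_R0 (g m) K).
        { apply sum_eq. intros t _. unfold h. rewrite Dn_even. simpl. rewrite Nat.add_0_r. reflexivity. }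
        assert (E2 : sum_f_R0 (fun t => h m (S (2 * t))) K = sum_f_R0 (h (S m)) K).
        { apply sum_eq. intros t _. unfold h. rewrite Dn_odd. simpl. rewrite Nat.add_succ_r. reflexivity. }
        rewrite E1, E2. assert (H1 := Hgs K). assert (H2 := IH K HK2 (S m)). assert (H3 := He m). lra. }
    intros M. apply (Hmain M O).
Qed.

Lemma sin_lower a : 0 <= a <= PI / 2 -> a / 3 <= sin a.
Proof.
  intros Ha. assert (PI <= 4) by apply PI_4. assert (PI/2 < PI) by apply PI2_Rlt_PI.
  destruct (sin_bound a 0 ltac:(lra) ltac:(lra)) as [H1 _].
  assert (E : sin_approx a (2 * 0 + 1) = a - a^3/6) by (unfold sin_approx, sin_term; simpl; field).
  rewrite E in H1. assert (a * a <= 4) by nra. nra.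
Qed.

Lemma angle_bound c1 c2 cm D eta : 0 < cm -> cm <= c1 -> cm <= c2 -> Rabs D < PI ->
  c1 ^ 2 + c2 ^ 2 - 2 * c1 * c2 * cos D <= eta ^ 2 -> 0 <= eta < cm -> Rabs D <= 3 * eta / cm.
Proof.
  intros Hcm H1 H2 HD HE Heta.
  assert (Hcos : 0 < cos D).
  { destruct (Rlt_le_dec 0 (cos D)) as [h|h]; auto. exfalso.
    assert (c1 * c2 * cos D <= 0). { assert (0 <= c1 * c2) by nra. nra. }
    nra. }
  assert (Hcs : cos (Rabs D) = cos D /\ (sin (Rabs D))^2 = (sin D)^2 /\ 0 <= Rabs D).
  { unfold Rabs. destruct (Rcase_abs D). rewrite cos_neg, sin_neg. split; [auto|split; [ring|lra]].
    split; [auto|split; [ring|lra]]. }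
  destruct Hcs as [Hc1 [Hs1 Ha0]].
  assert (Ha : Rabs D < PI / 2).
  { destruct (Rlt_le_dec (Rabs D) (PI/2)) as [h|h]; auto. exfalso.
    assert (cos (Rabs D) <= 0) by (apply cos_le_0; lra). lra. }
  assert (Hsl := sin_lower (Rabs D) ltac:(lra)).
  assert (Hsc := sin2_cos2 D). unfold Rsqr in Hsc.
  assert (Hs2 : c1^2 * (sin D)^2 <= eta ^ 2).
  { assert (0 <= (c1 * cos D - c2)^2) by (apply pow2_ge_0). nra. }
  assert (Hs3 : cm^2 * (sin (Rabs D))^2 <= eta ^ 2).
  { rewrite Hs1. assert (cm^2 <= c1^2) by nra. assert (0 <= (sin D)^2) by apply pow2_ge_0. nra. }
  assert (Hx : cm * (Rabs D / 3) <= eta).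
  { assert (0 <= cm * (Rabs D / 3)) by (apply Rmult_le_pos; lra).
    assert (cm * (Rabs D / 3) <= cm * sin (Rabs D)) by (apply Rmult_le_compat_l; lra).
    assert (0 <= cm * sin (Rabs D)) by lra.
    assert ((cm * sin (Rabs D))^2 <= eta^2) by (rewrite Rpow_mult_distr; exact Hs3).
    nra. }
  apply Rmult_le_reg_l with (cm / 3). lra.
  replace (cm / 3 * (3 * eta / cm)) with eta by (field; lra). lra.
Qed.

Lemma powerRZ_neg_nat x n : powerRZ x (- Z.of_nat n) = / x ^ n.
Proof.
  destruct n. simpl. rewrite Rinv_1. reflexivity.
  simpl. rewrite SuccNat2Pos.id_succ. reflexivity.
Qed.

Lemma powerRZ_sub_nat x a c : x <> 0 -> powerRZ x (Z.of_nat a - Z.of_nat c) = x ^ a * / x ^ c.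
Proof.
  intros H. unfold Z.sub. rewrite powerRZ_add by auto. rewrite <- pow_powerRZ, powerRZ_neg_nat. reflexivity.
Qed.

Definition rhoK r q k := / r ^ (q * k).
Definition alph q k theta := INR q * INR k * theta.
Definition epsK r q k := r ^ (2 * q * k) / 15.
Definition zf r gamma b theta q k N beta tau (j : nat) :=
  b * tau * r ^ q * (rhoK r q k) ^ j *
  cos (beta + gamma - INR N * alph q k theta + INR j * alph q k theta).

Lemma zf_eq r gamma b theta q k N beta tau n : 0 < r -> (n <= N)%nat ->
  b * tau * powerRZ r (Z.of_nat q - Z.of_nat (q * k * (N - n))) *
    cos (beta + gamma - INR n * INR q * INR k * theta) =
  zf r gamma b theta q k N beta tau (N - n).
Proof.
  intros Hr Hn. unfold zf, rhoK, alph. rewrite powerRZ_sub_nat by lra.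
  rewrite pow_mult, minus_INR by auto. rewrite <- Rinv_pow. 2:{ apply pow_nonzero. lra. }
  f_equal. ring. f_equal. ring.
Qed.

Lemma rho_gt1 r q k : 0 < r < 1 -> (1 <= q)%nat -> (1 <= k)%nat -> 1 < rhoK r q k.
Proof.
  intros Hr Hq Hk. unfold rhoK.
  assert (0 < r ^ (q*k)) by (apply pow_lt; lra).
  assert (r ^ (q*k) < 1) by (apply pow_lt_1_compat; [lra|lia]).
  rewrite <- Rinv_1. apply Rinv_lt_contravar; lra.
Qed.

Lemma eps_rho r q k : 0 < r -> epsK r q k = / (15 * (rhoK r q k) ^ 2).
Proof.
  intros Hr. unfold epsK, rhoK. replace (2 * q * k)%nat with (2 * (q * k))%nat by lia.
  rewrite (Nat.mul_comm 2 (q*k)), pow_mult. assert (0 < r ^ (q*k)) by (apply pow_lt; lra).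
  rewrite pow_inv. set (X := r ^ (q*k)) in *. field. lra.
Qed.

Lemma zf_rec r gamma b theta q k N beta tau :
  Rec (rhoK r q k) (cos (alph q k theta)) (zf r gamma b theta q k N beta tau).
Proof.
  intros i. unfold zf. set (a := alph q k theta). set (rho := rhoK r q k).
  set (A := beta + gamma - INR N * a + INR (S i) * a).
  replace (beta + gamma - INR N * a + INR (S (S i)) * a) with (A + a) by (unfold A; rewrite !S_INR; ring).
  replace (beta + gamma - INR N * a + INR i * a) with (A - a) by (unfold A; rewrite !S_INR; ring).
  fold A. rewrite cos_plus, cos_minus. simpl. ring.
Qed.

Lemma zf_bound r gamma b theta q k N beta tau i : 0 < r -> 0 < b -> 0 <= tau <= rhoK r q k ->
  Rabs (zf r gamma b theta q k N beta tau i) <= (b * rhoK r q k * r ^ q) * (rhoK r q k) ^ i.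
Proof.
  intros Hr Hb Ht. unfold zf.
  assert (0 < r^q) by (apply pow_lt; lra).
  assert (0 <= rhoK r q k ^ i) by (apply pow_le; lra).
  rewrite Rabs_mult. assert (Hc := COS_bound (beta + gamma - INR N * alph q k theta + INR i * alph q k theta)).
  assert (Rabs (cos (beta + gamma - INR N * alph q k theta + INR i * alph q k theta)) <= 1) by (apply Rabs_le; lra).
  rewrite Rabs_right by (apply Rle_ge; repeat apply Rmult_le_pos; lra).
  assert (b * tau * r ^ q * rhoK r q k ^ i <= b * rhoK r q k * r ^ q * rhoK r q k ^ i).
  { apply Rmult_le_compat_r; auto. apply Rmult_le_compat_r. lra. apply Rmult_le_compat_l; lra. }
  assert (0 <= b * tau * r ^ q * rhoK r q k ^ i) by (repeat apply Rmult_le_pos; lra).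
  nra.
Qed.

Lemma diam_piece r gamma b theta q k N j beta1 tau1 beta2 tau2 (u v : Z) :
  0 < r < 1 -> 0 < b -> (1 <= q)%nat -> (1 <= k)%nat -> sin (alph q k theta) <> 0 ->
  1 <= tau1 -> 1 <= tau2 -> 0 <= beta1 < PI -> 0 <= beta2 < PI ->
  Rabs (zf r gamma b theta q k N beta1 tau1 j - IZR u) <= epsK r q k ->
  Rabs (zf r gamma b theta q k N beta1 tau1 (S j) - IZR v) <= epsK r q k ->
  Rabs (zf r gamma b theta q k N beta2 tau2 j - IZR u) <= epsK r q k ->
  Rabs (zf r gamma b theta q k N beta2 tau2 (S j) - IZR v) <= epsK r q k ->
  5 * epsK r q k / (rhoK r q k ^ j * Rabs (sin (alph q k theta))) < b * r ^ q ->
  Rabs (beta1 - beta2) <= 3 * (5 * epsK r q k / (rhoK r q k ^ j * Rabs (sin (alph q k theta)))) / (b * r ^ q).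
Proof.
  intros Hr Hb Hq Hk Hs Ht1 Ht2 Hb1 Hb2 Hu1 Hv1 Hu2 Hv2 Hsmall.
  set (a := alph q k theta) in *. set (rho := rhoK r q k) in *. set (eps := epsK r q k) in *.
  assert (Hrho : 1 < rho) by (apply rho_gt1; auto).
  assert (Heps : 0 < eps) by (unfold eps, epsK; apply Rdiv_lt_0_compat; [apply pow_lt|]; lra).
  assert (Hrq : 0 < r ^ q) by (apply pow_lt; lra).
  assert (Hpj : 0 < rho ^ j) by (apply pow_lt; lra).
  assert (Has : 0 < Rabs (sin a)) by (apply Rabs_pos_lt; auto).
  set (c1 := b * tau1 * r ^ q). set (c2 := b * tau2 * r ^ q).
  set (A1 := beta1 + gamma - INR N * a + INR j * a).
  set (A2 := beta2 + gamma - INR N * a + INR j * a).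
  assert (Z1 : zf r gamma b theta q k N beta1 tau1 j = c1 * rho ^ j * cos A1) by reflexivity.
  assert (Z2 : zf r gamma b theta q k N beta2 tau2 j = c2 * rho ^ j * cos A2) by reflexivity.
  assert (Z1' : zf r gamma b theta q k N beta1 tau1 (S j) = c1 * (rho * rho ^ j) * cos (A1 + a)).
  { unfold zf. fold a rho. rewrite S_INR. unfold A1, c1. simpl. f_equal. f_equal. ring. }
  assert (Z2' : zf r gamma b theta q k N beta2 tau2 (S j) = c2 * (rho * rho ^ j) * cos (A2 + a)).
  { unfold zf. fold a rho. rewrite S_INR. unfold A2, c2. simpl. f_equal. f_equal. ring. }
  rewrite Z1 in Hu1. rewrite Z2 in Hu2. rewrite Z1' in Hv1. rewrite Z2' in Hv2.
  rewrite cos_plus in Hv1, Hv2.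
  set (dX := c1 * cos A1 - c2 * cos A2). set (dY := c1 * sin A1 - c2 * sin A2).
  set (e1 := c1 * rho ^ j * cos A1 - c2 * rho ^ j * cos A2).
  set (e2 := c1 * (rho * rho ^ j) * (cos A1 * cos a - sin A1 * sin a) -
             c2 * (rho * rho ^ j) * (cos A2 * cos a - sin A2 * sin a)).
  assert (He1 : Rabs e1 <= 2 * eps).
  { apply Rabs_inv_le in Hu1. apply Rabs_inv_le in Hu2. apply Rabs_le. unfold e1. lra. }
  assert (He2 : Rabs e2 <= 2 * eps).
  { apply Rabs_inv_le in Hv1. apply Rabs_inv_le in Hv2. apply Rabs_le. unfold e2. lra. }
  set (w := rho ^ j * sin a).
  assert (Ew1 : w * dX = sin a * e1) by (unfold w, dX, e1; ring).
  assert (Ew2 : w * dY = e1 * cos a - e2 / rho) by (unfold w, dY, e1, e2; field; lra).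
  assert (Hsa : Rabs (sin a) <= 1) by (apply Rabs_le; apply SIN_bound).
  assert (Hca : Rabs (cos a) <= 1) by (apply Rabs_le; apply COS_bound).
  assert (B1 : Rabs (w * dX) <= 2 * eps).
  { rewrite Ew1, Rabs_mult. assert (0 <= Rabs e1) by apply Rabs_pos. nra. }
  assert (B2 : Rabs (w * dY) <= 4 * eps).
  { rewrite Ew2. eapply Rle_trans. apply Rabs_triang. rewrite Rabs_Ropp, Rabs_mult.
    unfold Rdiv. rewrite Rabs_mult, (Rabs_right (/ rho)) by (apply Rle_ge, Rlt_le, Rinv_0_lt_compat; lra).
    assert (0 <= Rabs e1) by apply Rabs_pos. assert (0 <= Rabs e2) by apply Rabs_pos.
    assert (Rabs e1 * Rabs (cos a) <= 2 * eps) by nra.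
    assert (/ rho <= 1) by (rewrite <- Rinv_1; apply Rinv_le_contravar; lra).
    assert (0 < / rho) by (apply Rinv_0_lt_compat; lra).
    assert (Rabs e2 * / rho <= 2 * eps) by nra. lra. }
  assert (Hw : 0 < Rabs w) by (unfold w; rewrite Rabs_mult, Rabs_right by lra; nra).
  assert (Hsq : (w * dX) ^ 2 + (w * dY) ^ 2 <= 25 * eps ^ 2).
  { assert (X1 : (w*dX)^2 <= (2*eps)^2).
    { rewrite <- (pow2_abs (w*dX)). apply pow_incr. split; [apply Rabs_pos|auto]. }
    assert (X2 : (w*dY)^2 <= (4*eps)^2).
    { rewrite <- (pow2_abs (w*dY)). apply pow_incr. split; [apply Rabs_pos|auto]. }
    assert ((2*eps)^2 + (4*eps)^2 <= 25*eps^2) by nra. lra. }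
  assert (Hid : c1 ^ 2 + c2 ^ 2 - 2 * c1 * c2 * cos (beta1 - beta2) = dX ^ 2 + dY ^ 2).
  { replace (beta1 - beta2) with (A1 - A2) by (unfold A1, A2; ring).
    rewrite cos_minus. unfold dX, dY.
    assert (S1 := sin2_cos2 A1). assert (S2 := sin2_cos2 A2). unfold Rsqr in S1, S2.
    replace (c1 ^ 2) with (c1^2 * (sin A1 * sin A1 + cos A1 * cos A1)) by (rewrite S1; ring).
    replace (c2 ^ 2) with (c2^2 * (sin A2 * sin A2 + cos A2 * cos A2)) at 1 by (rewrite S2; ring).
    ring. }
  apply angle_bound with (c1 := c1) (c2 := c2).
  - nra.
  - unfold c1. assert (0 < b * r^q) by nra. nra.
  - unfold c2. assert (0 < b * r^q) by nra. nra.
  - apply Rabs_def1; lra.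
  - rewrite Hid.
    assert (E : (5 * eps / (rho ^ j * Rabs (sin a))) ^ 2 = 25 * eps ^ 2 / (Rabs w) ^ 2).
    { unfold w. rewrite Rabs_mult, (Rabs_right (rho^j)) by lra. field. lra. }
    rewrite E.
    apply Rmult_le_reg_l with (Rabs w ^ 2). apply pow_lt; lra.
    replace (Rabs w ^ 2 * (25 * eps ^ 2 / Rabs w ^ 2)) with (25 * eps^2) by (field; lra).
    rewrite pow2_abs. replace (w ^ 2 * (dX ^ 2 + dY ^ 2)) with ((w*dX)^2 + (w*dY)^2) by ring. lra.
  - split; auto. apply Rlt_le, Rdiv_lt_0_compat. lra. nra.
Qed.

Lemma cntb_shift f N : cntb f (S N) = ((if f O then 1 else 0) + cntb (fun j => f (S j)) N)%nat.
Proof. induction N. simpl. lia. rewrite cntb_S, IHN. simpl cntb. lia. Qed.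

Lemma count_rev P N : count_upto P N = cntb (fun j => P (N - j)%nat) N.
Proof.
  induction N. reflexivity.
  simpl count_upto. rewrite cntb_shift. rewrite IHN. simpl. lia.
Qed.

Lemma cntb_neg g N : (cntb (fun j => negb (g j)) N + cntb g N = N)%nat.
Proof. induction N. reflexivity. rewrite !cntb_S. destruct (g N); simpl; lia. Qed.

Lemma cntb_ext f g N : (forall j, (j < N)%nat -> f j = g j) -> cntb f N = cntb g N.
Proof. induction N; intros H. auto. rewrite !cntb_S, H, IHN by (auto; intros; apply H; lia). auto. Qed.

Definition Aset r gamma b theta q k N (a : nat * (Z * Z)) (beta : R) : Prop :=
  0 <= beta < PI /\ exists tau, 1 <= tau <= rhoK r q k /\
    Rabs (zf r gamma b theta q k N beta tau (fst a) - IZR (fst (snd a))) <= epsK r q k /\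
    Rabs (zf r gamma b theta q k N beta tau (S (fst a)) - IZR (snd (snd a))) <= epsK r q k.

Lemma div_bound x i N : (1 <= i)%nat -> (x * i <= N)%nat -> (x <= N / i)%nat.
Proof.
  intros Hi H. pose proof (Nat.div_mod N i ltac:(lia)). pose proof (Nat.mod_upper_bound N i ltac:(lia)).
  destruct (le_lt_dec x (N / i)); auto. exfalso. nia.
Qed.

Lemma div3 N i : (3 <= i)%nat -> (3 * (N / i) <= N)%nat.
Proof.
  intros Hi. pose proof (Nat.div_mod N i ltac:(lia)). pose proof (Nat.mod_upper_bound N i ltac:(lia)). nia.
Qed.

Lemma E_to_tau r gamma b theta q k delta N beta :
  E_qk r gamma b theta q k delta N beta ->
  0 <= beta < PI /\ exists tau, 1 <= tau <= rhoK r q k /\ prop_count r gamma b theta q k N tau beta > 1 - delta.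
Proof.
  intros [Hb [m [[Hub Hlub] Hm]]]. split; auto.
  destruct (classic (exists tau, 1 <= tau <= rhoK r q k /\ prop_count r gamma b theta q k N tau beta > 1 - delta)) as [h|h]; auto.
  exfalso. assert (m <= 1 - delta); [|lra].
  apply Hlub. intros y [tau [Ht Hy]]. subst y.
  rewrite powerRZ_neg_nat in Ht. fold (rhoK r q k) in Ht.
  destruct (Rle_dec (prop_count r gamma b theta q k N tau beta) (1 - delta)); auto.
  exfalso. apply h. exists tau. split; auto. lra.
Qed.

Lemma cover_N r gamma b theta q k i N (Lfun : nat -> nat -> list (Z * Z)) beta :
  0 < r < 1 -> 0 < b -> (1 <= q)%nat -> (1 <= k)%nat -> (3 <= i)%nat -> (2 <= N)%nat ->
  (forall j bb p, Sset (rhoK r q k) (cos (alph q k theta)) (epsK r q k) (b * rhoK r q k * r ^ q) j bb p ->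
     In p (Lfun j bb)) ->
  E_qk r gamma b theta q k (/ INR i) N beta ->
  exists j p, In j (seq (N - 2 - 2 * (N / i)) (2 * (N / i) + 1)) /\ In p (Lfun j (N / i)%nat) /\
    Aset r gamma b theta q k N (j, p) beta.
Proof.
  intros Hr Hb Hq Hk Hi HN HL HE.
  destruct (E_to_tau _ _ _ _ _ _ _ _ _ HE) as [Hbeta [tau [Htau Hpc]]].
  set (z := zf r gamma b theta q k N beta tau).
  set (eps := epsK r q k).
  set (bad := cntb (badf eps z) N).
  unfold prop_count in Hpc.
  set (P := fun n : nat => Rle_b (dist_int (b * tau * powerRZ r (Z.of_nat q - Z.of_nat (q * k * (N - n))) *
         cos (beta + gamma - INR n * INR q * INR k * theta))) (r ^ (2 * q * k) / 15)) in Hpc.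
  set (good := count_upto P N) in Hpc.
  assert (Hgb : (good + bad = N)%nat).
  { unfold good. rewrite count_rev.
    assert (E : cntb (fun j => P (N - j)%nat) N = cntb (fun j => negb (badf eps z j)) N).
    { apply cntb_ext. intros j hj. unfold badf, P. rewrite Bool.negb_involutive.
      rewrite zf_eq; [|lra|lia]. replace (N - (N - j))%nat with j by lia. reflexivity. }
    rewrite E. unfold bad. apply (cntb_neg (badf eps z)). }
  assert (HNpos : 0 < INR N) by (apply lt_0_INR; lia).
  assert (Hipos : 0 < INR i) by (apply lt_0_INR; lia).
  assert (Hbi : (bad * i < N)%nat).
  { assert (H1 : INR good > (1 - / INR i) * INR N).
    { replace (INR good) with (INR good / INR N * INR N) by (field; lra).
      apply Rmult_lt_compat_r; lra. }
    assert (H2 : INR good * INR i > INR N * INR i - INR N).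
    { replace (INR N * INR i - INR N) with ((1 - / INR i) * INR N * INR i) by (field; lra).
      apply Rmult_lt_compat_r; lra. }
    assert (H3 : (N * i < good * i + N)%nat).
    { apply INR_lt. rewrite plus_INR, !mult_INR. lra. }
    nia. }
  assert (HbN : (bad <= N / i)%nat) by (apply div_bound; lia).
  assert (Hb3 : (bad * 3 < N)%nat) by nia.
  set (g := fun j => andb (negb (badf eps z j)) (negb (badf eps z (S j)))).
  destruct (classic (exists j, (j < N - 1)%nat /\ g j = true)) as [Hex|Hnex].
  2:{ exfalso.
      assert (Hreg := nocons_gen (badf eps z) 0 N).
      assert (H : (N <= S (2 * (cntb (badf eps z) (0 + N) - cntb (badf eps z) 0)))%nat).
      { apply Hreg. intros t h1 h2.
        destruct (badf eps z t) eqn:E1; auto. destruct (badf eps z (S t)) eqn:E2; auto.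
        exfalso. apply Hnex. exists t. split. lia. unfold g. rewrite E1, E2. reflexivity. }
      change (cntb (badf eps z) 0) with 0%nat in H. rewrite Nat.add_0_l in H. fold bad in H. lia. }
  destruct (max_true g (N - 1) Hex) as [j [Hj [Hgj Hmax]]].
  assert (Hreg : (N - S j <= S (2 * (cntb (badf eps z) (S j + (N - S j)) - cntb (badf eps z) (S j))))%nat).
  { apply nocons_gen. intros t h1 h2.
    assert (Hg := Hmax t ltac:(lia) ltac:(lia)). unfold g in Hg.
    destruct (badf eps z t), (badf eps z (S t)); simpl in Hg; auto; congruence. }
  replace (S j + (N - S j))%nat with N in Hreg by lia. fold bad in Hreg.
  assert (Hc1 := cntb_mono (badf eps z) (S j) N ltac:(lia)).
  assert (Hc2 := cntb_mono (badf eps z) j N ltac:(lia)).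
  unfold g in Hgj. apply andb_prop in Hgj. destruct Hgj as [G1 G2].
  apply Bool.negb_true_iff in G1, G2.
  destruct (good_int eps z j G1) as [u Hu].
  destruct (good_int eps z (S j) G2) as [v Hv].
  pose proof (div3 N i Hi).
  exists j, (u, v). split; [|split].
  - apply in_seq. lia.
  - apply HL. exists z. split; [split|split].
    + apply zf_rec.
    + intros i0. apply zf_bound; lra.
    + change (epsK r q k) with eps. assert (cntb (badf eps z) N = bad) by reflexivity. lia.
    + simpl. split; auto.
  - split; auto. exists tau. split; auto.
Qed.

Lemma ln_le' x y : 0 < x -> x <= y -> ln x <= ln y.
Proof. intros h1 h2. destruct h2. left; apply ln_increasing; auto. subst; lra. Qed.
Lemma exp_le' x y : x <= y -> exp x <= exp y.
Proof. intros h. destruct h. left; apply exp_increasing; auto. subst; lra. Qed.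
Lemma ln_ge0 x : 1 <= x -> 0 <= ln x.
Proof. intros. rewrite <- ln_1. apply ln_le'; lra. Qed.
Lemma exp_ge x : 1 + x <= exp x.
Proof. destruct (Req_dec x 0). subst. rewrite exp_0. lra. left. apply exp_ineq1; auto. Qed.
Lemma ln_1p x : 0 <= x -> ln (1 + x) <= x.
Proof. intros. rewrite <- (ln_exp x) at 2. apply ln_le'. lra. apply exp_ge. Qed.

Lemma exp_pow_nat x N : exp (INR N * x) = (exp x) ^ N.
Proof. induction N. simpl. rewrite Rmult_0_l, exp_0. auto.
  rewrite S_INR. replace ((INR N + 1) * x) with (INR N * x + x) by ring. rewrite exp_plus, IHN. simpl. ring. Qed.

Lemma expo_est (s L0 lam rho Mc0 Cs : R) (i : nat) :
  0 < s -> 0 < L0 -> L0 <= ln rho -> 0 < lam <= 1 -> lam <= s * L0 / 4 -> 0 < Mc0 -> 0 < Cs ->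
  (3 <= i)%nat -> INR i * (s * L0 / 4) >= 3 * ln 2592 - 3 * ln lam -> INR i * (s / 4) >= 12 + 2 * s ->
  exists C kap, 0 < C /\ 0 < kap < 1 /\ forall N, (2 <= N)%nat ->
    INR (2 * (N / i) + 1) * (Mc0 * (1 + lam) ^ N * Wc rho lam ^ (N / i)) *
      Rpower (Cs / rho ^ (N - 2 - 2 * (N / i))) s <= C * kap ^ N.
Proof.
  intros Hs HL0 HLr Hl Hlam HM HC Hi Hi1 Hi2.
  assert (Hrho : 1 < rho).
  { destruct (Rlt_le_dec 1 rho) as [h|h]; auto. exfalso.
    destruct (Rle_lt_dec rho 0) as [h0|h0].
    -
      unfold ln in HLr. destruct (Rlt_dec 0 rho); [lra|]. lra.
    - assert (ln rho <= ln 1) by (apply ln_le'; lra). rewrite ln_1 in H. lra. }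
  set (mu := s * L0 / 4).
  set (K0 := ln (2 / mu) + ln Mc0 + s * ln Cs + 2 * s * ln rho).
  exists (exp K0), (exp (- (s * L0 / 8))). split. apply exp_pos. split. split. apply exp_pos.
  rewrite <- exp_0. apply exp_increasing. nra.
  intros N HN.
  set (b := (N / i)%nat). set (jj := (N - 2 - 2 * b)%nat).
  assert (Hbi : (b * i <= N)%nat).
  { unfold b. pose proof (Nat.div_mod N i ltac:(lia)). nia. }
  assert (Hb3 : (3 * b <= N)%nat).
  { unfold b. pose proof (Nat.div_mod N i ltac:(lia)). pose proof (Nat.mod_upper_bound N i ltac:(lia)). nia. }
  assert (HiR : 3 <= INR i) by (replace 3 with (INR 3) by (simpl; ring); apply le_INR; auto).
  assert (HNR : 2 <= INR N) by (replace 2 with (INR 2) by (simpl; ring); apply le_INR; auto).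
  assert (HbR : INR b * INR i <= INR N) by (rewrite <- mult_INR; apply le_INR; auto).
  assert (HbR0 : 0 <= INR b) by apply pos_INR.
  assert (HjjR : INR N - 2 - 2 * INR b <= INR jj).
  { unfold jj. destruct (le_lt_dec (2 + 2*b) N).
    - rewrite !minus_INR by lia. rewrite mult_INR. simpl. lra.
    - assert (INR N < 2 + 2 * INR b).
      { replace (2 + 2 * INR b) with (INR (2 + 2 * b)) by (rewrite plus_INR, mult_INR; simpl; ring).
        apply lt_INR; auto. }
      assert (0 <= INR (N - 2 - 2*b)) by apply pos_INR. lra. }
  assert (H2b1 : 1 <= INR (2 * b + 1) <= INR N).
  { split. replace 1 with (INR 1) by reflexivity. apply le_INR; lia. apply le_INR; lia. }
  assert (Hlnrho : 0 < ln rho) by lra.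
  destruct (Vc_ge rho lam ltac:(lra) Hl) as [V1 V2].
  destruct (Wc_ge rho lam ltac:(lra) Hl) as [W1 W2].
  assert (HVpos : 0 < Vc rho lam) by lra.
  assert (HlnW : ln (Wc rho lam) = 3 * (ln 2592 + INR 4 * ln rho - ln lam)).
  { unfold Wc. rewrite ln_pow by lra. unfold Vc.
    assert (0 < rho ^ 4) by (apply pow_lt; lra).
    unfold Rdiv. rewrite (ln_mult (2592 * rho^4) (/ lam)) by (try apply Rinv_0_lt_compat; lra).
    rewrite (ln_mult 2592 (rho^4)) by lra. rewrite ln_Rinv by lra. rewrite ln_pow by lra.
    simpl. ring. }
  assert (Hlnlam : ln lam <= 0) by (rewrite <- ln_1; apply ln_le'; lra).
  assert (Hln2592 : 0 <= ln 2592) by (apply ln_ge0; lra).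
  set (T1 := INR (2 * b + 1)). set (T2 := Mc0 * (1 + lam) ^ N * Wc rho lam ^ b).
  set (T3 := Rpower (Cs / rho ^ jj) s).
  assert (P1 : 0 < T1) by (unfold T1; lra).
  assert (P2 : 0 < T2).
  { unfold T2. apply Rmult_lt_0_compat. apply Rmult_lt_0_compat; auto. apply pow_lt; lra. apply pow_lt; lra. }
  assert (P3 : 0 < T3) by apply exp_pos.
  assert (Hrj : 0 < rho ^ jj) by (apply pow_lt; lra).
  rewrite <- (exp_ln (T1 * T2 * T3)) by (apply Rmult_lt_0_compat; [apply Rmult_lt_0_compat|]; auto).
  rewrite <- exp_pow_nat, <- exp_plus. apply exp_le'.
  rewrite !ln_mult by (auto; try apply Rmult_lt_0_compat; auto).
  assert (L1 : ln T1 <= ln (2 / mu) + mu * INR N / 2).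
  { assert (Hmu : 0 < mu) by (unfold mu; nra).
    apply Rle_trans with (ln (INR N)). apply ln_le'; [lra|]. unfold T1; lra.
    rewrite <- (ln_exp (mu * INR N / 2)). rewrite <- ln_mult by (try apply exp_pos; apply Rdiv_lt_0_compat; lra).
    apply ln_le'. lra. assert (E := exp_ge (mu * INR N / 2)).
    replace (INR N) with (2 / mu * (mu * INR N / 2)) at 1 by (field; lra).
    apply Rmult_le_compat_l. apply Rlt_le, Rdiv_lt_0_compat; lra. nra. }
  assert (L2 : ln T2 = ln Mc0 + INR N * ln (1 + lam) + INR b * ln (Wc rho lam)).
  { unfold T2.
    assert (0 < (1+lam)^N) by (apply pow_lt; lra). assert (0 < Wc rho lam ^ b) by (apply pow_lt; lra).
    rewrite (ln_mult (Mc0 * (1+lam)^N) (Wc rho lam ^ b)) by (try apply Rmult_lt_0_compat; lra).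
    rewrite (ln_mult Mc0 ((1+lam)^N)) by lra. rewrite !ln_pow by lra. ring. }
  assert (L3 : ln T3 = s * (ln Cs - INR jj * ln rho)).
  { unfold T3, Rpower. rewrite ln_exp. unfold Rdiv.
    rewrite ln_mult by (try apply Rinv_0_lt_compat; lra). rewrite ln_Rinv by lra. rewrite ln_pow by lra.
    ring. }
  rewrite L2, L3.
  assert (A1 : INR N * ln (1 + lam) <= INR N * mu).
  { apply Rmult_le_compat_l. lra. apply Rle_trans with lam. apply ln_1p; lra. unfold mu; lra. }
  assert (A2 : INR b * ln (Wc rho lam) <= INR N * mu + INR b * 12 * ln rho).
  { rewrite HlnW. simpl (INR 4).
    assert (E : INR b * (3 * (ln 2592 + (1 + 1 + 1 + 1) * ln rho - ln lam))
       = INR b * (3 * ln 2592 - 3 * ln lam) + INR b * 12 * ln rho) by ring.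
    rewrite E. apply Rplus_le_compat_r.
    apply Rle_trans with (INR b * (INR i * (s * L0 / 4))).
    apply Rmult_le_compat_l; lra. unfold mu.
    replace (INR b * (INR i * (s * L0 / 4))) with ((INR b * INR i) * (s * L0 / 4)) by ring.
    apply Rmult_le_compat_r. nra. auto. }
  assert (A3 : INR b * (12 + 2 * s) <= INR N * (s / 4)).
  { apply Rle_trans with (INR b * (INR i * (s / 4))). apply Rmult_le_compat_l; lra.
    replace (INR b * (INR i * (s / 4))) with ((INR b * INR i) * (s / 4)) by ring.
    apply Rmult_le_compat_r; lra. }
  assert (A4 : - (s * INR jj * ln rho) <= - (s * (INR N - 2 - 2 * INR b) * ln rho)).
  { apply Ropp_le_contravar. apply Rmult_le_compat_r. lra. apply Rmult_le_compat_l; lra. }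
  assert (A5 : mu <= s * ln rho / 4) by (unfold mu; nra).
  assert (A6 : INR N * (s * L0) <= INR N * (s * ln rho)) by (apply Rmult_le_compat_l; nra).
  assert (A7 : INR b * 12 * ln rho + 2 * s * INR b * ln rho <= INR N * (s / 4) * ln rho).
  { replace (INR b * 12 * ln rho + 2 * s * INR b * ln rho) with (INR b * (12 + 2 * s) * ln rho) by ring.
    apply Rmult_le_compat_r; lra. }
  assert (A8 : INR N * mu <= INR N * (s * ln rho / 4)) by (apply Rmult_le_compat_l; lra).
  unfold K0. unfold mu in *. nra.
Qed.

Lemma Cov_le s dl E e1 e2 : e1 <= e2 -> Cov s dl E e1 -> Cov s dl E e2.
Proof.
  intros h [U [d [a [b c]]]]. exists U, d. split; auto. split; auto. intros M. specialize (c M). lra.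
Qed.

Lemma Cov_union_all s dl (Em : nat -> R -> Prop) :
  (forall m e, 0 < e -> Cov s dl (Em m) e) -> forall e, 0 < e -> Cov s dl (fun x => exists m, Em m x) e.
Proof.
  intros H e He.
  assert (Hp : forall m, 0 < 2 ^ m) by (intros; apply pow_lt; lra).
  assert (Hc := Cov_union s dl Em (fun m => e / 2 ^ S m) (fun m => e / 2 ^ m)).
  simpl in Hc. replace e with (e / 1) by field. apply Hc.
  - intros m. apply H. apply Rdiv_lt_0_compat; auto. simpl. specialize (Hp m). lra.
  - intros m. apply Rlt_le, Rdiv_lt_0_compat; auto.
  - intros m. right. field. apply Rgt_not_eq, Hp.
Qed.

Lemma pow_big rho X : 1 < rho -> exists J : nat, forall j, (J <= j)%nat -> X <= rho ^ j.
Proof.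
  intros Hr. destruct (INR_unbounded (X / (rho - 1))) as [J HJ]. exists J. intros j Hj.
  assert (P := poly j (rho - 1) ltac:(lra)). replace (1 + (rho - 1)) with rho in P by ring.
  assert (INR J <= INR j) by (apply le_INR; auto).
  assert (X / (rho - 1) * (rho - 1) <= INR j * (rho - 1)) by (apply Rmult_le_compat_r; lra).
  replace (X / (rho - 1) * (rho - 1)) with X in H0 by (field; lra). lra.
Qed.

Lemma sin_ne0 q k theta : (1 <= q)%nat -> (1 <= k)%nat -> irrational (theta / PI) -> sin (alph q k theta) <> 0.
Proof.
  intros Hq Hk Hirr Hs. apply sin_eq_0_0 in Hs. destruct Hs as [z Hz].
  apply Hirr. exists z, (Z.of_nat (q * k)). split. lia.
  rewrite <- INR_IZR_INZ, mult_INR. unfold alph in Hz.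
  assert (0 < INR q) by (apply lt_0_INR; lia). assert (0 < INR k) by (apply lt_0_INR; lia).
  assert (PI > 0) by apply PI_RGT_0.
  assert (Hpos : 0 < INR q * INR k * PI) by (apply Rmult_lt_0_compat; [nra|lra]).
  apply (Rmult_eq_reg_r (INR q * INR k * PI)). 2:{ lra. }
  replace (theta / PI * (INR q * INR k * PI)) with (INR q * INR k * theta) by (field; lra).
  rewrite Hz. field. split; lra.
Qed.

Lemma Lqk_null r gamma b theta s lam i q k :
  0 < r < 1 -> 0 < b -> irrational (theta / PI) -> 0 < s -> (3 <= i)%nat -> (1 <= q)%nat -> (1 <= k)%nat ->
  0 < lam <= 1 -> lam <= s * ln (/ r) / 4 ->
  INR i * (s * ln (/ r) / 4) >= 3 * ln 2592 - 3 * ln lam -> INR i * (s / 4) >= 12 + 2 * s ->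
  forall dl e, 0 < dl -> 0 < e ->
  Cov s dl (fun beta => limsup_set (fun N => E_qk r gamma b theta q k (/ INR i) N) beta) e.
Proof.
  intros Hr Hb Hirr Hs Hi Hq Hk Hl Hl2 Hi1 Hi2 dl e Hdl He.
  set (rho := rhoK r q k). set (a := alph q k theta). set (eps := epsK r q k).
  set (B := b * rho * r ^ q).
  assert (Hrho : 1 < rho) by (apply rho_gt1; auto).
  assert (Hrq : 0 < r ^ q) by (apply pow_lt; lra).
  assert (HL0 : 0 < ln (/ r)).
  { rewrite <- ln_1. apply ln_increasing. lra. rewrite <- Rinv_1. apply Rinv_lt_contravar; lra. }
  assert (HLr : ln (/ r) <= ln rho).
  { unfold rho, rhoK. rewrite <- pow_inv. rewrite ln_pow by (apply Rinv_0_lt_compat; lra).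
    assert (1 <= INR (q * k)) by (replace 1 with (INR 1) by reflexivity; apply le_INR; nia). nra. }
  assert (Heps : eps = / (15 * rho ^ 2)) by (apply eps_rho; lra).
  assert (Hr2 : 1 < rho ^ 2) by (simpl; nra).
  assert (Hepspos : 0 < eps) by (rewrite Heps; apply Rinv_0_lt_compat; lra).
  assert (Heps1 : eps <= 1).
  { rewrite Heps. rewrite <- Rinv_1. apply Rinv_le_contravar; lra. }
  assert (Heps2 : eps * (1 + rho) ^ 2 < / 2).
  { rewrite Heps. apply Rmult_lt_reg_r with (15 * rho ^ 2). lra.
    rewrite Rmult_assoc, (Rmult_comm ((1+rho)^2)), <- Rmult_assoc, Rinv_l by lra. simpl. nra. }
  assert (Hc : Rabs (cos a) <= 1) by (apply Rabs_le; apply COS_bound).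
  assert (HB : 0 <= B) by (unfold B; apply Rmult_le_pos; [nra|lra]).
  assert (Hsin : sin a <> 0) by (apply sin_ne0; auto).
  assert (Has : 0 < Rabs (sin a)) by (apply Rabs_pos_lt; auto).
  assert (Hch : forall jb : nat * nat, exists l : list (Z*Z),
     INR (length l) <= Mc rho B lam * (1 + lam) ^ (fst jb) * Wc rho lam ^ (snd jb) /\
     forall p, Sset rho (cos a) eps B (fst jb) (snd jb) p -> In p l).
  { intros [j bb]. apply count_main; auto; lra. }
  apply functional_choice in Hch. destruct Hch as [Lf0 HLf0].
  set (Lfun := fun j bb => Lf0 (j, bb)).
  set (Mc0 := Mc rho B lam).
  assert (HMc : 0 < Mc0).
  { unfold Mc0, Mc. assert (0 < (2*B+4)^2) by (apply pow_lt; lra).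
    apply Rdiv_lt_0_compat; [|lra]. nra. }
  set (Cs := 15 * eps / (Rabs (sin a) * (b * r ^ q))).
  assert (HCs : 0 < Cs).
  { unfold Cs. apply Rdiv_lt_0_compat. lra. apply Rmult_lt_0_compat; nra. }
  destruct (expo_est s (ln (/ r)) lam rho Mc0 Cs i Hs HL0 HLr Hl Hl2 HMc HCs Hi Hi1 Hi2)
    as [C [kap [HC [Hkap Hest]]]].
  destruct (pow_big rho (Cs / dl + Cs / 3 + 1) Hrho) as [J HJ].
  assert (Hy : 0 < e * (1 - kap) / (C + 1)) by (apply Rdiv_lt_0_compat; nra).
  destruct (pow_lt_1_zero kap ltac:(rewrite Rabs_right; lra) _ Hy) as [N2 HN2].
  set (N0 := (N2 + 3 * J + 6)%nat).
  apply Cov_mono with (F := fun beta => exists m, E_qk r gamma b theta q k (/ INR i) (N0 + m) beta).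
  { intros beta Hls. destruct (Hls N0) as [N [h1 [h2 h3]]]. exists (N - N0)%nat.
    replace (N0 + (N - N0))%nat with N by lia. auto. }
  apply Cov_le with ((C + 1) * kap ^ N0 / (1 - kap)).
  { assert (H := HN2 N0 ltac:(unfold N0; lia)). rewrite Rabs_right in H by (apply Rle_ge, pow_le; lra).
    apply Rmult_le_reg_r with ((1 - kap) / (C + 1)). apply Rdiv_lt_0_compat; lra.
    replace ((C + 1) * kap ^ N0 / (1 - kap) * ((1 - kap) / (C + 1))) with (kap ^ N0) by (field; lra).
    replace (e * ((1 - kap) / (C + 1))) with (e * (1 - kap) / (C + 1)) by (field; lra). lra. }
  assert (Hc2 := Cov_union s dl (fun m => E_qk r gamma b theta q k (/ INR i) (N0 + m))
     (fun m => (C + 1) * kap ^ (N0 + m)) (fun m => (C + 1) * kap ^ (N0 + m) / (1 - kap))).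
  cbv beta in Hc2. rewrite Nat.add_0_r in Hc2. apply Hc2; clear Hc2.
  2:{ intros m. apply Rmult_le_pos. apply Rmult_le_pos. lra. apply pow_le; lra.
      apply Rlt_le, Rinv_0_lt_compat; lra. }
  2:{ intros m. right. replace (N0 + S m)%nat with (S (N0 + m)) by lia. simpl. field. lra. }
  intros m. set (N := (N0 + m)%nat).
  set (bb := (N / i)%nat). set (jj := (N - 2 - 2 * bb)%nat).
  assert (H3b := div3 N i Hi).
  assert (HjjJ : (J <= jj)%nat) by (unfold jj, bb, N, N0 in *; lia).
  assert (HrJ := HJ jj HjjJ).
  assert (Hrjj : 0 < rho ^ jj) by (apply pow_lt; lra).
  set (l := flat_map (fun j => map (fun p => (j, p)) (Lfun j bb)) (seq jj (2 * bb + 1))).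
  apply Cov_le with (INR (length l) * Rpower (Cs / rho ^ jj) s + kap ^ N).
  { assert (Hl1 : INR (length l) <= INR (2 * bb + 1) * (Mc0 * (1 + lam) ^ N * Wc rho lam ^ bb)).
    { unfold l. eapply Rle_trans. apply (len_flat_map_le _ (fun _ => Mc0 * (1 + lam) ^ N * Wc rho lam ^ bb)).
      - intros j Hj. apply in_seq in Hj. rewrite length_map.
        destruct (HLf0 (j, bb)) as [Hlen _]. simpl in Hlen. eapply Rle_trans. apply Hlen.
        apply Rmult_le_compat_r. apply pow_le. destruct (Wc_ge rho lam ltac:(lra) Hl); lra.
        apply Rmult_le_compat_l. lra. apply Rle_pow. lra. unfold jj in Hj; lia.
      - rewrite fold_const, length_seq. lra. }
    assert (HE := Hest N ltac:(unfold N, N0; lia)).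
    fold bb in HE. fold jj in HE.
    assert (0 <= Rpower (Cs / rho ^ jj) s) by (left; apply exp_pos).
    assert (INR (length l) * Rpower (Cs / rho ^ jj) s <= C * kap ^ N).
    { eapply Rle_trans. apply Rmult_le_compat_r. auto. exact Hl1. exact HE. }
    assert (0 <= kap ^ N) by (apply pow_le; lra). nra. }
  apply (Cov_finite s dl _ (Aset r gamma b theta q k N) l).
  - auto.
  - split. apply Rdiv_lt_0_compat; auto.
    apply Rmult_le_reg_r with (rho ^ jj). auto. unfold Rdiv. rewrite Rmult_assoc, Rinv_l by lra.
    assert (Cs <= dl * (Cs / dl + Cs / 3 + 1)).
    { replace (dl * (Cs / dl + Cs / 3 + 1)) with (Cs + dl * (Cs / 3 + 1)) by (field; lra).
      assert (0 <= dl * (Cs / 3 + 1)) by (apply Rmult_le_pos; lra). lra. }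
    nra.
  - apply pow_lt; lra.
  - intros [j p] Hin beta1 beta2 [Hb1 [t1 [Ht1 [Hu1 Hv1]]]] [Hb2 [t2 [Ht2 [Hu2 Hv2]]]].
    unfold l in Hin. apply in_flat_map in Hin. destruct Hin as [j' [Hj' Hin]].
    apply in_map_iff in Hin. destruct Hin as [p' [Heq _]]. inversion Heq; subst j' p'.
    apply in_seq in Hj'. simpl fst in *. simpl snd in *.
    assert (Hrj : rho ^ jj <= rho ^ j) by (apply Rle_pow; [lra|lia]).
    assert (Hsmall : 5 * eps / (rho ^ j * Rabs (sin a)) < b * r ^ q).
    { apply Rle_lt_trans with (5 * eps / (rho ^ jj * Rabs (sin a))).
      - unfold Rdiv. apply Rmult_le_compat_l. lra. apply Rinv_le_contravar. nra.
        apply Rmult_le_compat_r; lra.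
      - assert (E : 5 * eps / (rho ^ jj * Rabs (sin a)) = (Cs / 3) / rho ^ jj * (b * r ^ q)).
        { unfold Cs. field. repeat split; try lra. }
        rewrite E. rewrite <- (Rmult_1_l (b * r ^ q)) at 2. apply Rmult_lt_compat_r. nra.
        apply Rmult_lt_reg_r with (rho ^ jj). auto. unfold Rdiv. rewrite Rmult_assoc, Rinv_l, Rmult_1_r by lra.
        assert (0 <= Cs / dl) by (apply Rlt_le, Rdiv_lt_0_compat; lra). lra. }
    assert (Hd := diam_piece r gamma b theta q k N j beta1 t1 beta2 t2 (fst p) (snd p)
       Hr Hb Hq Hk Hsin ltac:(lra) ltac:(lra) Hb1 Hb2 Hu1 Hv1 Hu2 Hv2 Hsmall).
    eapply Rle_trans. exact Hd.
    assert (E2 : 3 * (5 * eps / (rho ^ j * Rabs (sin a))) / (b * r ^ q) = Cs / rho ^ j).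
    { unfold Cs. field. repeat split; try lra. }
    change (epsK r q k) with eps. change (rhoK r q k) with rho. change (alph q k theta) with a. rewrite E2. unfold Rdiv. apply Rmult_le_compat_l. lra. apply Rinv_le_contravar; lra.
  - intros beta HE.
    destruct (cover_N r gamma b theta q k i N Lfun beta Hr Hb Hq Hk Hi ltac:(unfold N, N0; lia)
       (fun j bb0 p H => proj2 (HLf0 (j, bb0)) p H) HE) as [j [p [Hj [Hp HA]]]].
    exists (j, p). split; auto. unfold l. apply in_flat_map. exists j. split. exact Hj.
    apply in_map_iff. exists p. split; auto.
Qed.

Theorem lemma4p4 (r gamma b theta : R) :
  0 < r < 1 -> 0 < b -> irrational (theta / PI) ->
  hausdorff_dim_is (E_set r gamma b theta) 0.
Proof.
  intros Hr Hb Hirr.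
  assert (Hnull : forall s, 0 < s -> Hmeasure_zero s (E_set r gamma b theta)).
  { intros s Hs delta Hd eps He.
    set (L0 := ln (/ r)).
    assert (HL0 : 0 < L0).
    { unfold L0. rewrite <- ln_1. apply ln_increasing. lra. rewrite <- Rinv_1. apply Rinv_lt_contravar; lra. }
    set (lam := Rmin 1 (s * L0 / 4)).
    assert (Hlam : 0 < lam <= 1 /\ lam <= s * L0 / 4).
    { unfold lam. split. split. apply Rmin_pos; [lra|nra]. apply Rmin_l. apply Rmin_r. }
    destruct (INR_unbounded (Rmax ((3 * ln 2592 - 3 * ln lam) / (s * L0 / 4)) ((12 + 2 * s) / (s / 4))))
      as [n0 Hn0].
    set (i := Nat.max 3 n0).
    assert (Hi3 : (3 <= i)%nat) by (unfold i; lia).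
    assert (Hin : INR n0 <= INR i) by (apply le_INR; unfold i; lia).
    assert (M1 := Rmax_l ((3 * ln 2592 - 3 * ln lam) / (s * L0 / 4)) ((12 + 2 * s) / (s / 4))).
    assert (M2 := Rmax_r ((3 * ln 2592 - 3 * ln lam) / (s * L0 / 4)) ((12 + 2 * s) / (s / 4))).
    assert (HsL : 0 < s * L0 / 4) by nra.
    assert (Hi1 : INR i * (s * L0 / 4) >= 3 * ln 2592 - 3 * ln lam).
    { apply Rle_ge. replace (3 * ln 2592 - 3 * ln lam) with ((3 * ln 2592 - 3 * ln lam) / (s * L0 / 4) * (s * L0 / 4)) by (field; lra).
      apply Rmult_le_compat_r; lra. }
    assert (Hi2 : INR i * (s / 4) >= 12 + 2 * s).
    { apply Rle_ge. replace (12 + 2 * s) with ((12 + 2 * s) / (s / 4) * (s / 4)) by (field; lra).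
      apply Rmult_le_compat_r; lra. }
    change (Cov s delta (E_set r gamma b theta) eps).
    apply Cov_mono with (F := fun beta => exists q, exists k,
       (1 <= q)%nat /\ (1 <= k)%nat /\ limsup_set (fun N => E_qk r gamma b theta q k (/ INR i) N) beta).
    { intros beta HE. destruct (HE i Hi3) as [q [k [Hq [Hk Hls]]]]. exists q, k. auto. }
    apply (Cov_union_all s delta (fun q beta => exists k, (1 <= q)%nat /\ (1 <= k)%nat /\
       limsup_set (fun N => E_qk r gamma b theta q k (/ INR i) N) beta)); auto.
    intros q e1 He1.
    apply (Cov_union_all s delta (fun k beta => (1 <= q)%nat /\ (1 <= k)%nat /\
       limsup_set (fun N => E_qk r gamma b theta q k (/ INR i) N) beta)); auto.
    intros k e2 He2.
    destruct (le_lt_dec 1 q) as [Hq|Hq]; [destruct (le_lt_dec 1 k) as [Hk|Hk]|].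
    - apply Cov_mono with (F := fun beta => limsup_set (fun N => E_qk r gamma b theta q k (/ INR i) N) beta).
      { intros beta [_ [_ H]]; auto. }
      apply Lqk_null with (lam := lam); auto; try lra. all: try exact Hi1. all: try exact Hi2. all: try (unfold L0 in Hlam; lra).
    - apply Cov_mono with (F := fun _ => False). { intros beta [_ [h _]]; lia. }
      apply Cov_empty; auto.
    - apply Cov_mono with (F := fun _ => False). { intros beta [h _]; lia. }
      apply Cov_empty; auto. }
  split.
  - intros x [Hx _]. lra.
  - intros m' Hm'. destruct (Rle_dec m' 0) as [h|h]; auto.
    assert (Hs : 0 < m' / 2) by lra.
    assert (H := Hm' (m' / 2) (conj (Rlt_le _ _ Hs) (Hnull _ Hs))). lra.
Qed.
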